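(* Let $\mathcal{C}$ be a Grothendieck site with enough points, let $X,Y$ be presheaves of groupoids on $\mathcal{C}$ with $\Gamma=\mathbb{Z}/2\mathbb{Z}$-actions, and let $f\colon X\to Y$ be a $\Gamma$-equivariant morphism. If $f$ is a local weak equivalence, then $f^{h\Gamma}\colon X^{h\Gamma}\to Y^{h\Gamma}$ is a local weak equivalence.
   Context: A groupoid is a small category with all morphisms invertible; a map of groupoids is a weak equivalence if it is an equivalence of categories. A presheaf of groupoids is a strict contravariant functor from $\mathcal{C}$ to groupoids; stalks at points are defined by the same colimit formula as for presheaves of sets. A morphism of presheaves of groupoids is a local weak equivalence if it induces a weak equivalence of groupoids on all stalks at points of $\mathcal{C}$. A $\Gamma$-action on a presheaf of groupoids is a $\Gamma$-action on each $X(U)$ (on objects and morphisms, compatible with structure maps; nontrivial element $x\mapsto\bar x$) compatible with restrictions; a $\Gamma$-equivariant morphism commutes with the actions on sections. For a groupoid $X$ with $\Gamma$-action, $X^{h\Gamma}$ has objects $(x,\phi)$ with $\phi\in\mathrm{Hom}(x,\bar x)$, $\bar\phi=\phi^{-1}$, and arrows $(x,\phi)\to(x_1,\phi_1)$ the $\alpha\colon x\to x_1$ with $\phi_1\alpha=\bar\alpha\phi$; for presheaves $X^{h\Gamma}(U)=X(U)^{h\Gamma}$, and $f^{h\Gamma}$ is given on sections by $(x,\phi)\mapsto(f(x),f(\phi))$, $\alpha\mapsto f(\alpha)$. *)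

(* Defs.v *)
(* Classical axioms (constructive indefinite
   description, excluded middle) are used only to build data on quotients. *)
From Stdlib Require Import ClassicalEpsilon.
Set Implicit Arguments.
Unset Strict Implicit.

Record Cat := {
  cob :> Type;
  chom : cob -> cob -> Type;
  cid : forall U, chom U U;
  ccomp : forall U V W, chom V W -> chom U V -> chom U W;   (* ccomp g f = g o f *)
  ccomp_id_l : forall U V (f : chom U V), ccomp (cid V) f = f;
  ccomp_id_r : forall U V (f : chom U V), ccomp f (cid U) = f;
  ccomp_assoc : forall U V W Z (f : chom U V) (g : chom V W) (h : chom W Z),
      ccomp h (ccomp g f) = ccomp (ccomp h g) f }.
Arguments chom {c} _ _.
Arguments cid {c} _.
Arguments ccomp {c U V W} _ _.

Definition sieve (C : Cat) (U : C) := forall V : C, chom V U -> Prop.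
Definition is_sieve (C : Cat) (U : C) (R : sieve U) : Prop :=
  forall (V W : C) (f : chom V U) (g : chom W V), R V f -> R W (ccomp f g).
Definition maximal_sieve (C : Cat) (U : C) : sieve U := fun _ _ => True.
Arguments maximal_sieve {C} U _ _.
Definition pullback_sieve (C : Cat) (U V : C) (h : chom V U) (R : sieve U) : sieve V :=
  fun W g => R W (ccomp h g).

Record Site := {
  scat :> Cat;
  cov : forall U : scat, sieve U -> Prop;
  cov_sieve : forall U R, @cov U R -> is_sieve R;
  cov_max : forall U, @cov U (maximal_sieve U);
  cov_stable : forall U R V (h : chom V U), @cov U R -> @cov V (pullback_sieve h R);
  cov_trans : forall U R R', @cov U R -> is_sieve R' ->
      (forall V (h : chom V U), R V h -> @cov V (pullback_sieve h R')) -> @cov U R' }.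

(* Points of a site: flat (= filtering) covariant functors u : C -> Set *)
(* sending covering sieves to jointly surjective families               *)
(* (these correspond to the points of the topos Sh(C)).                 *)

Record Point (S : Site) := {
  pt : S -> Type;
  ptmap : forall U V : S, chom U V -> pt U -> pt V;
  ptmap_id : forall U x, ptmap (cid U) x = x;
  ptmap_comp : forall U V W (f : chom U V) (g : chom V W) x,
      ptmap (ccomp g f) x = ptmap g (ptmap f x);
  pt_nonempty : exists U, inhabited (pt U);
  pt_cone : forall U V (x : pt U) (y : pt V),
      exists W (z : pt W) (f : chom W U) (g : chom W V), ptmap f z = x /\ ptmap g z = y;
  pt_equalize : forall U V (f g : chom V U) (y : pt V), ptmap f y = ptmap g y ->
      exists W (z : pt W) (h : chom W V), ptmap h z = y /\ ccomp f h = ccomp g h;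
  pt_cont : forall U (R : sieve U), @cov S U R -> forall x : pt U,
      exists V (f : chom V U) (y : pt V), R V f /\ ptmap f y = x }.
Arguments ptmap {S} p {U V} _ _.

Definition quot (T : Type) (R : T -> T -> Prop) := {P : T -> Prop | exists t, P = R t}.
Definition cls (T : Type) (R : T -> T -> Prop) (t : T) : quot R :=
  exist _ (R t) (ex_intro _ t eq_refl).
Definition repr (T : Type) (R : T -> T -> Prop) (q : quot R) : T :=
  proj1_sig (constructive_indefinite_description _ (proj2_sig q)).
Arguments cls {T} R t.

Definition germ (S : Site) (p : Point S) (F : S -> Type) := {U : S & (pt p U * F U)%type}.

(* Germ equivalence: equal after restriction to a common refinement in the
   (cofiltered) category of elements of p.  This is the colimit formula. *)
Definition germ_rel (S : Site) (p : Point S) (F : S -> Type)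
    (Fr : forall U V : S, chom V U -> F U -> F V) (r1 r2 : germ p F) : Prop :=
  exists (W : S) (z : pt p W) (f : chom W (projT1 r1)) (g : chom W (projT1 r2)),
    ptmap p f z = fst (projT2 r1) /\ ptmap p g z = fst (projT2 r2) /\
    Fr _ _ f (snd (projT2 r1)) = Fr _ _ g (snd (projT2 r2)).
Arguments germ_rel {S} p {F} Fr r1 r2.

Definition stalk (S : Site) (p : Point S) (F : S -> Type)
    (Fr : forall U V : S, chom V U -> F U -> F V) := quot (germ_rel p Fr).
Arguments stalk {S} p {F} Fr.

Definition stalk_map (S : Site) (p : Point S) (F G : S -> Type)
    (Fr : forall U V : S, chom V U -> F U -> F V)
    (Gr : forall U V : S, chom V U -> G U -> G V)
    (phi : forall U, F U -> G U) (q : stalk p Fr) : stalk p Gr :=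
  let r := repr q in
  cls (germ_rel p Gr) (existT _ (projT1 r) (fst (projT2 r), phi _ (snd (projT2 r)))).
Arguments stalk_map {S} p {F G} Fr Gr phi q.

(* encoded by object type, arrow type, source, target, identities and   *)
(* composition (cmp g f = g o f, meaningful when src g = tgt f).        *)

Record PreGpd := {
  Ob : Type; Arr : Type;
  src : Arr -> Ob; tgt : Arr -> Ob;
  idg : Ob -> Arr; cmp : Arr -> Arr -> Arr }.
Arguments src {p} _.
Arguments tgt {p} _.
Arguments idg {p} _.
Arguments cmp {p} _ _.

Record is_gpd (G : PreGpd) : Prop := {
  src_id : forall x : Ob G, src (idg x) = x;
  tgt_id : forall x : Ob G, tgt (idg x) = x;
  src_cmp : forall g f : Arr G, src g = tgt f -> src (cmp g f) = src f;
  tgt_cmp : forall g f : Arr G, src g = tgt f -> tgt (cmp g f) = tgt g;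
  cmp_id_l : forall f : Arr G, cmp (idg (tgt f)) f = f;
  cmp_id_r : forall f : Arr G, cmp f (idg (src f)) = f;
  cmp_assoc : forall h g f : Arr G, src h = tgt g -> src g = tgt f ->
      cmp h (cmp g f) = cmp (cmp h g) f;
  has_inv : forall f : Arr G, exists g : Arr G,
      src g = tgt f /\ tgt g = src f /\ cmp g f = idg (src f) /\ cmp f g = idg (tgt f) }.

Record PreFun (G H : PreGpd) := { fo : Ob G -> Ob H; fa : Arr G -> Arr H }.

Record is_fun (G H : PreGpd) (F : PreFun G H) : Prop := {
  fun_src : forall a, src (fa F a) = fo F (src a);
  fun_tgt : forall a, tgt (fa F a) = fo F (tgt a);
  fun_id : forall x, fa F (idg x) = idg (fo F x);
  fun_cmp : forall g f, src g = tgt f -> fa F (cmp g f) = cmp (fa F g) (fa F f) }.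

Definition idF (G : PreGpd) : PreFun G G := {| fo := fun x => x; fa := fun a => a |}.
Definition compF (G H K : PreGpd) (F2 : PreFun H K) (F1 : PreFun G H) : PreFun G K :=
  {| fo := fun x => fo F2 (fo F1 x); fa := fun a => fa F2 (fa F1 a) |}.

Definition is_iso (G : PreGpd) (a : Arr G) : Prop :=
  exists b : Arr G, src b = tgt a /\ tgt b = src a /\
    cmp b a = idg (src a) /\ cmp a b = idg (tgt a).

Definition nat_iso (G H : PreGpd) (F K : PreFun G H) (eta : Ob G -> Arr H) : Prop :=
  (forall x, src (eta x) = fo F x /\ tgt (eta x) = fo K x /\ is_iso (eta x)) /\
  (forall a, cmp (eta (tgt a)) (fa F a) = cmp (fa K a) (eta (src a))).

(* weak equivalence of groupoids = equivalence of categories *)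
Definition is_equivalence (G H : PreGpd) (F : PreFun G H) : Prop :=
  exists (K : PreFun H G) (eta : Ob G -> Arr G) (eps : Ob H -> Arr H),
    is_fun K /\ nat_iso (idF G) (compF K F) eta /\ nat_iso (compF F K) (idF H) eps.

Record PrePGpd (C : Cat) := {
  psec : C -> PreGpd;
  pres : forall U V : C, chom V U -> PreFun (psec U) (psec V) }.
Arguments pres {C} p {U V} _.

Record is_pgpd (C : Cat) (X : PrePGpd C) : Prop := {
  sec_gpd : forall U, is_gpd (psec X U);
  res_fun : forall U V (h : chom V U), is_fun (pres X h);
  res_id_o : forall U x, fo (pres X (cid U)) x = x;
  res_id_a : forall U a, fa (pres X (cid U)) a = a;
  res_comp_o : forall U V W (f : chom V U) (g : chom W V) x,
      fo (pres X (ccomp f g)) x = fo (pres X g) (fo (pres X f) x);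
  res_comp_a : forall U V W (f : chom V U) (g : chom W V) a,
      fa (pres X (ccomp f g)) a = fa (pres X g) (fa (pres X f) a) }.

Record PGpd (C : Cat) := { pg :> PrePGpd C; pg_ax : is_pgpd pg }.

Record PreMor (C : Cat) (X Y : PrePGpd C) := {
  mc : forall U, PreFun (psec X U) (psec Y U) }.

Record is_mor (C : Cat) (X Y : PrePGpd C) (f : PreMor X Y) : Prop := {
  mor_fun : forall U, is_fun (mc f U);
  mor_nat_o : forall U V (h : chom V U) x,
      fo (pres Y h) (fo (mc f U) x) = fo (mc f V) (fo (pres X h) x);
  mor_nat_a : forall U V (h : chom V U) a,
      fa (pres Y h) (fa (mc f U) a) = fa (mc f V) (fa (pres X h) a) }.

Record PMor (C : Cat) (X Y : PGpd C) := { pm :> PreMor X Y; pm_ax : is_mor pm }.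

Definition obF (C : Cat) (X : PrePGpd C) : C -> Type := fun U => Ob (psec X U).
Definition arF (C : Cat) (X : PrePGpd C) : C -> Type := fun U => Arr (psec X U).
Definition obR (C : Cat) (X : PrePGpd C) : forall U V : C, chom V U -> obF X U -> obF X V :=
  fun U V h => fo (pres X h).
Definition arR (C : Cat) (X : PrePGpd C) : forall U V : C, chom V U -> arF X U -> arF X V :=
  fun U V h => fa (pres X h).

Arguments obF {C} X _.
Arguments arF {C} X _.
Arguments obR {C} X.
Arguments arR {C} X.

Definition refine_t (S : Site) (p : Point S) (U1 U2 : S) :=
  {W : S & (pt p W * chom W U1 * chom W U2)%type}.

(* composition of germs of arrows: compose representatives at a common
   refinement where they are composable (well defined on composable germs) *)
Definition stalk_cmp (S : Site) (p : Point S) (X : PrePGpd S)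
    (b a : stalk p (arR X)) : stalk p (arR X) :=
  let ra := repr a in let rb := repr b in
  let cond := fun t : refine_t p (projT1 ra) (projT1 rb) =>
      ptmap p (snd (fst (projT2 t))) (fst (fst (projT2 t))) = fst (projT2 ra) /\
      ptmap p (snd (projT2 t)) (fst (fst (projT2 t))) = fst (projT2 rb) /\
      src (fa (pres X (snd (projT2 t))) (snd (projT2 rb)))
        = tgt (fa (pres X (snd (fst (projT2 t)))) (snd (projT2 ra))) in
  match excluded_middle_informative (exists t, cond t) with
  | left h =>
      let t := proj1_sig (constructive_indefinite_description _ h) in
      cls (germ_rel p (arR X))
        (existT _ (projT1 t) (fst (fst (projT2 t)),
           cmp (fa (pres X (snd (projT2 t))) (snd (projT2 rb)))
               (fa (pres X (snd (fst (projT2 t)))) (snd (projT2 ra)))))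
  | right _ => a
  end.

Arguments stalk_cmp {S} p X b a.

Definition stalk_gpd (S : Site) (p : Point S) (X : PrePGpd S) : PreGpd := {|
  Ob := stalk p (obR X);
  Arr := stalk p (arR X);
  src := stalk_map p (arR X) (obR X) (fun U => @src (psec X U));
  tgt := stalk_map p (arR X) (obR X) (fun U => @tgt (psec X U));
  idg := stalk_map p (obR X) (arR X) (fun U => @idg (psec X U));
  cmp := stalk_cmp p X |}.

Definition stalk_fun (S : Site) (p : Point S) (X Y : PrePGpd S) (f : PreMor X Y) :
    PreFun (stalk_gpd p X) (stalk_gpd p Y) :=
  @Build_PreFun (stalk_gpd p X) (stalk_gpd p Y)
    (stalk_map p (obR X) (obR Y) (fun U => fo (mc f U)))
    (stalk_map p (arR X) (arR Y) (fun U => fa (mc f U))).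

Definition local_we (S : Site) (X Y : PrePGpd S) (f : PreMor X Y) : Prop :=
  forall p : Point S, is_equivalence (stalk_fun p f).

(* Enough points: the family of all points is conservative on sheaves   *)
(* of sets.                                                             *)

Record PSet (C : Cat) := {
  ps : C -> Type;
  psr : forall U V : C, chom V U -> ps U -> ps V;
  psr_id : forall U s, psr (cid U) s = s;
  psr_comp : forall U V W (f : chom V U) (g : chom W V) s,
      psr (ccomp f g) s = psr g (psr f s) }.
Arguments psr {C} p {U V} _ _.

Definition is_sheaf (S : Site) (F : PSet S) : Prop :=
  forall (U : S) (R : sieve U), @cov S U R ->
  forall s : forall (V : S) (f : chom V U), R V f -> ps F V,
    (forall V (f : chom V U) (h : R V f) W (g : chom W V) (h' : R W (ccomp f g)),
        psr F g (s V f h) = s W (ccomp f g) h') ->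
    exists! x : ps F U, forall V (f : chom V U) (h : R V f), psr F f x = s V f h.

Definition is_nat (C : Cat) (F G : PSet C) (phi : forall U, ps F U -> ps G U) : Prop :=
  forall U V (f : chom V U) s, psr G f (phi U s) = phi V (psr F f s).

Definition bijective (A B : Type) (g : A -> B) : Prop :=
  (forall x y, g x = g y -> x = y) /\ (forall y, exists x, g x = y).

Definition enough_points (S : Site) : Prop :=
  forall (F G : PSet S) (phi : forall U, ps F U -> ps G U),
    is_sheaf F -> is_sheaf G -> is_nat phi ->
    (forall p : Point S, bijective (stalk_map p (@psr _ F) (@psr _ G) phi)) ->
    forall U, bijective (phi U).

(* Gamma = Z/2 actions (given by the action of the nontrivial element)  *)

Record GammaAction (C : Cat) (X : PGpd C) := {
  tau : forall U, PreFun (psec X U) (psec X U);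
  tau_fun : forall U, is_fun (tau U);
  tau_invol_o : forall U x, fo (tau U) (fo (tau U) x) = x;
  tau_invol_a : forall U a, fa (tau U) (fa (tau U) a) = a;
  tau_res_o : forall U V (h : chom V U) x,
      fo (pres X h) (fo (tau U) x) = fo (tau V) (fo (pres X h) x);
  tau_res_a : forall U V (h : chom V U) a,
      fa (pres X h) (fa (tau U) a) = fa (tau V) (fa (pres X h) a) }.

Definition equivariant (C : Cat) (X Y : PGpd C) (aX : GammaAction X) (aY : GammaAction Y)
    (f : PMor X Y) : Prop :=
  (forall U x, fo (mc f U) (fo (tau aX U) x) = fo (tau aY U) (fo (mc f U) x)) /\
  (forall U a, fa (mc f U) (fa (tau aX U) a) = fa (tau aY U) (fa (mc f U) a)).

(* objects (x, phi), phi : x -> xbar, with phibar = phi^-1 *)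
Definition hob (G : PreGpd) (t : PreFun G G) :=
  {q : (Ob G * Arr G)%type |
     src (snd q) = fst q /\ tgt (snd q) = fo t (fst q) /\
     cmp (fa t (snd q)) (snd q) = idg (fst q) /\
     cmp (snd q) (fa t (snd q)) = idg (fo t (fst q))}.
Definition hx (G : PreGpd) (t : PreFun G G) (o : hob t) : Ob G := fst (proj1_sig o).
Definition hphi (G : PreGpd) (t : PreFun G G) (o : hob t) : Arr G := snd (proj1_sig o).

Definition harr (G : PreGpd) (t : PreFun G G) :=
  {q : (hob t * hob t * Arr G)%type |
     src (snd q) = hx (fst (fst q)) /\ tgt (snd q) = hx (snd (fst q)) /\
     cmp (hphi (snd (fst q))) (snd q) = cmp (fa t (snd q)) (hphi (fst (fst q)))}.

Lemma hid_ok (G : PreGpd) (t : PreFun G G) (HG : is_gpd G) (Ht : is_fun t) (o : hob t) :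
  src (idg (hx o)) = hx o /\ tgt (idg (hx o)) = hx o /\
  cmp (hphi o) (idg (hx o)) = cmp (fa t (idg (hx o))) (hphi o).
Proof.
  destruct o as [[x ph] [H1 [H2 ?]]]; unfold hx, hphi; simpl in *.
  split; [apply (src_id HG) | split; [apply (tgt_id HG) |]].
  subst x. rewrite (fun_id Ht), <- H2.
  rewrite (cmp_id_r HG), (cmp_id_l HG). reflexivity.
Qed.

Definition hid (G : PreGpd) (t : PreFun G G) (HG : is_gpd G) (Ht : is_fun t)
    (o : hob t) : harr t :=
  exist _ (o, o, idg (hx o)) (hid_ok HG Ht o).

Lemma hcmp_ok (G : PreGpd) (t : PreFun G G) (HG : is_gpd G) (Ht : is_fun t)
    (b a : harr t) (e : fst (fst (proj1_sig b)) = snd (fst (proj1_sig a))) :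
  let al := snd (proj1_sig a) in let be := snd (proj1_sig b) in
  let o1 := fst (fst (proj1_sig a)) in let o3 := snd (fst (proj1_sig b)) in
  src (cmp be al) = hx o1 /\ tgt (cmp be al) = hx o3 /\
  cmp (hphi o3) (cmp be al) = cmp (fa t (cmp be al)) (hphi o1).
Proof.
  destruct a as [[[o1 o2] al] [Ha1 [Ha2 Ha3]]].
  destruct b as [[[o2' o3] be] [Hb1 [Hb2 Hb3]]].
  simpl in *. subst o2'.
  destruct o1 as [[x1 p1] [P11 [P12 ?]]].
  destruct o2 as [[x2 p2] [P21 [P22 ?]]].
  destruct o3 as [[x3 p3] [P31 ?]].
  unfold hx, hphi in *; simpl in *.
  assert (Hc : src be = tgt al) by congruence.
  split; [rewrite (src_cmp HG Hc); exact Ha1 |].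
  split; [rewrite (tgt_cmp HG Hc); exact Hb2 |].
  rewrite (fun_cmp Ht Hc).
  rewrite (cmp_assoc HG) by congruence.
  rewrite Hb3.
  rewrite <- (cmp_assoc HG) by (rewrite ?(fun_src Ht); congruence).
  rewrite Ha3.
  rewrite (cmp_assoc HG) by (rewrite ?(fun_src Ht), ?(fun_tgt Ht); congruence).
  reflexivity.
Qed.

Definition hcmp (G : PreGpd) (t : PreFun G G) (HG : is_gpd G) (Ht : is_fun t)
    (b a : harr t) : harr t :=
  match excluded_middle_informative (fst (fst (proj1_sig b)) = snd (fst (proj1_sig a))) with
  | left e => exist _ (fst (fst (proj1_sig a)), snd (fst (proj1_sig b)),
                       cmp (snd (proj1_sig b)) (snd (proj1_sig a))) (hcmp_ok HG Ht e)
  | right _ => a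
  end.

Definition hfp_gpd (G : PreGpd) (t : PreFun G G) (HG : is_gpd G) (Ht : is_fun t) : PreGpd := {|
  Ob := hob t;
  Arr := harr t;
  src := fun a => fst (fst (proj1_sig a));
  tgt := fun a => snd (fst (proj1_sig a));
  idg := hid HG Ht;
  cmp := hcmp HG Ht |}.

Lemma hmap_ob_ok (G H : PreGpd) (tG : PreFun G G) (tH : PreFun H H) (F : PreFun G H)
    (HF : is_fun F) (HtG : is_fun tG) (invG : forall x, fo tG (fo tG x) = x)
    (co : forall x, fo F (fo tG x) = fo tH (fo F x))
    (ca : forall a, fa F (fa tG a) = fa tH (fa F a)) (o : hob tG) :
  let x := fo F (hx o) in let ph := fa F (hphi o) in
  src ph = x /\ tgt ph = fo tH x /\ cmp (fa tH ph) ph = idg x /\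
  cmp ph (fa tH ph) = idg (fo tH x).
Proof.
  destruct o as [[x ph] [H1 [H2 [H3 H4]]]]; unfold hx, hphi; simpl in *.
  split; [rewrite (fun_src HF); congruence |].
  split; [rewrite (fun_tgt HF), <- co; congruence |].
  rewrite <- ca, <- co.
  split.
  - rewrite <- (fun_cmp HF) by (rewrite (fun_src HtG); congruence).
    rewrite H3, (fun_id HF). reflexivity.
  - rewrite <- (fun_cmp HF) by (rewrite (fun_tgt HtG), H2, invG; congruence).
    rewrite H4, (fun_id HF). reflexivity.
Qed.

Definition hmap_ob (G H : PreGpd) (tG : PreFun G G) (tH : PreFun H H) (F : PreFun G H)
    (HF : is_fun F) (HtG : is_fun tG) (invG : forall x, fo tG (fo tG x) = x)
    (co : forall x, fo F (fo tG x) = fo tH (fo F x))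
    (ca : forall a, fa F (fa tG a) = fa tH (fa F a)) (o : hob tG) : hob tH :=
  exist _ (fo F (hx o), fa F (hphi o)) (hmap_ob_ok HF HtG invG co ca o).

Lemma hmap_arr_ok (G H : PreGpd) (tG : PreFun G G) (tH : PreFun H H) (F : PreFun G H)
    (HF : is_fun F) (HtG : is_fun tG) (invG : forall x, fo tG (fo tG x) = x)
    (co : forall x, fo F (fo tG x) = fo tH (fo F x))
    (ca : forall a, fa F (fa tG a) = fa tH (fa F a)) (a : harr tG) :
  let o1 := hmap_ob HF HtG invG co ca (fst (fst (proj1_sig a))) in
  let o2 := hmap_ob HF HtG invG co ca (snd (fst (proj1_sig a))) in
  let al := fa F (snd (proj1_sig a)) in
  src al = hx o1 /\ tgt al = hx o2 /\ cmp (hphi o2) al = cmp (fa tH al) (hphi o1).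
Proof.
  destruct a as [[[o1 o2] al] [Ha1 [Ha2 Ha3]]].
  destruct o1 as [[x1 p1] [P11 [P12 ?]]].
  destruct o2 as [[x2 p2] [P21 [P22 ?]]].
  unfold hmap_ob, hx, hphi in *; simpl in *.
  split; [rewrite (fun_src HF); congruence |].
  split; [rewrite (fun_tgt HF); congruence |].
  rewrite <- ca.
  rewrite <- (fun_cmp HF) by congruence.
  rewrite <- (fun_cmp HF) by (rewrite (fun_src HtG); congruence).
  rewrite Ha3. reflexivity.
Qed.

Definition hfp_map (G H : PreGpd) (tG : PreFun G G) (tH : PreFun H H)
    (HG : is_gpd G) (HtG : is_fun tG) (HH : is_gpd H) (HtH : is_fun tH)
    (F : PreFun G H) (HF : is_fun F) (invG : forall x, fo tG (fo tG x) = x)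
    (co : forall x, fo F (fo tG x) = fo tH (fo F x))
    (ca : forall a, fa F (fa tG a) = fa tH (fa F a)) :
    PreFun (hfp_gpd HG HtG) (hfp_gpd HH HtH) :=
  @Build_PreFun (hfp_gpd HG HtG) (hfp_gpd HH HtH)
    (hmap_ob HF HtG invG co ca)
    (fun a : harr tG => exist _ (hmap_ob HF HtG invG co ca (fst (fst (proj1_sig a))),
                          hmap_ob HF HtG invG co ca (snd (fst (proj1_sig a))),
                          fa F (snd (proj1_sig a))) (hmap_arr_ok HF HtG invG co ca a) : harr tH).

Definition hfp (C : Cat) (X : PGpd C) (aX : GammaAction X) : PrePGpd C := {|
  psec := fun U => hfp_gpd (sec_gpd (pg_ax X) U) (tau_fun aX U);
  pres := fun U V h =>
    hfp_map (sec_gpd (pg_ax X) U) (tau_fun aX U) (sec_gpd (pg_ax X) V) (tau_fun aX V)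
      (res_fun (pg_ax X) h) (fun x => tau_invol_o aX x) (tau_res_o aX h) (tau_res_a aX h) |}.

Definition hfp_mor (C : Cat) (X Y : PGpd C) (aX : GammaAction X) (aY : GammaAction Y)
    (f : PMor X Y) (Hf : equivariant aX aY f) : PreMor (hfp aX) (hfp aY) :=
  @Build_PreMor C (hfp aX) (hfp aY) (fun U =>
    hfp_map (sec_gpd (pg_ax X) U) (tau_fun aX U) (sec_gpd (pg_ax Y) U) (tau_fun aY U)
      (mor_fun (pm_ax f) U) (fun x => tau_invol_o aX x) (proj1 Hf U) (proj2 Hf U)).

(* Main.v *)
Require Import Defs.
From Stdlib Require Import ClassicalEpsilon FunctionalExtensionality PropExtensionality ProofIrrelevance.
Set Implicit Arguments.
Unset Strict Implicit.

Module M1.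
Set Implicit Arguments.
Unset Strict Implicit.

Lemma repr_cls (T : Type) (R : T -> T -> Prop) (q : quot R) : cls R (repr q) = q.
Proof.
  destruct q as [P H]. unfold repr. simpl.
  destruct (constructive_indefinite_description _ H) as [t Ht]. simpl.
  unfold cls. apply subset_eq_compat. symmetry. exact Ht.
Qed.

Lemma cls_iff (T : Type) (R : T -> T -> Prop) (Rr : forall x, R x x)
  (Rs : forall x y, R x y -> R y x) (Rt : forall x y z, R x y -> R y z -> R x z) a b :
  cls R a = cls R b <-> R a b.
Proof.
  split.
  - intro H. apply (f_equal (@proj1_sig _ _)) in H. simpl in H.
    rewrite H. apply Rr.
  - intro H. unfold cls. apply subset_eq_compat.
    apply functional_extensionality; intro x. apply propositional_extensionality.
    split; intro; eauto.
Qed.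

Section Pt.
Variables (S : Site) (p : Point S).

Lemma cone2 U V (u : pt p U) (v : pt p V) : exists W (w : pt p W) (f : chom W U) (g : chom W V),
  ptmap p f w = u /\ ptmap p g w = v.
Proof. apply pt_cone. Qed.

Lemma eqz U W (u : pt p U) (w : pt p W) (f g : chom W U) :
  ptmap p f w = u -> ptmap p g w = u ->
  exists W' (w' : pt p W') (h : chom W' W), ptmap p h w' = w /\ ccomp f h = ccomp g h.
Proof.
  intros H1 H2. assert (E : ptmap p f w = ptmap p g w) by congruence.
  destruct (pt_equalize E) as [W' [w' [h [E1 E2]]]].
  exists W', w', h. auto.
Qed.

Lemma ptc U V W (f : chom V U) (g : chom W V) (w : pt p W) (v : pt p V) (u : pt p U) :
  ptmap p g w = v -> ptmap p f v = u -> ptmap p (ccomp f g) w = u.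
Proof. intros. rewrite ptmap_comp. congruence. Qed.

Section Germ.
Variables (F : S -> Type) (Fr : forall U V : S, chom V U -> F U -> F V)
  (Fr_id : forall U s, Fr (cid U) s = s)
  (Fr_comp : forall U V W (f : chom V U) (g : chom W V) s, Fr (ccomp f g) s = Fr g (Fr f s)).

Definition mk (U : S) (u : pt p U) (s : F U) : germ p F := existT _ U (u, s).

Lemma gr_refl r : germ_rel p Fr r r.
Proof using Fr_id Fr_comp.
  destruct r as [U [u s]]. exists U, u, (cid U), (cid U). simpl.
  rewrite ptmap_id. auto.
Qed.

Lemma gr_sym r1 r2 : germ_rel p Fr r1 r2 -> germ_rel p Fr r2 r1.
Proof using Fr_id Fr_comp.
  intros [W [z [f [g [H1 [H2 H3]]]]]]. exists W, z, g, f. auto.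
Qed.

Lemma gr_trans r1 r2 r3 : germ_rel p Fr r1 r2 -> germ_rel p Fr r2 r3 -> germ_rel p Fr r1 r3.
Proof using Fr_id Fr_comp.
  destruct r1 as [U1 [u1 s1]], r2 as [U2 [u2 s2]], r3 as [U3 [u3 s3]]. simpl.
  intros [W1 [z1 [f1 [g1 [A1 [A2 A3]]]]]] [W2 [z2 [f2 [g2 [B1 [B2 B3]]]]]].
  simpl in *.
  destruct (cone2 z1 z2) as [V [v [h1 [h2 [C1 C2]]]]].
  destruct (@eqz _ _ u2 v (ccomp g1 h1) (ccomp f2 h2)) as [V' [v' [k [D1 D2]]]].
  - eapply ptc; eauto.
  - eapply ptc; eauto.
  - exists V', v', (ccomp (ccomp f1 h1) k), (ccomp (ccomp g2 h2) k). simpl.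
    split; [eapply ptc; [eauto| eapply ptc; eauto]|].
    split; [eapply ptc; [eauto| eapply ptc; eauto]|].
    rewrite !Fr_comp, A3. rewrite <- !Fr_comp, ccomp_assoc, D2, <- ccomp_assoc. rewrite !Fr_comp, B3. reflexivity.
Qed.

Lemma cls_gr a b : cls (germ_rel p Fr) a = cls (germ_rel p Fr) b <-> germ_rel p Fr a b.
Proof using Fr_id Fr_comp. apply cls_iff; [apply gr_refl | apply gr_sym | apply gr_trans]. Qed.

Lemma restr U W (u : pt p U) (w : pt p W) (g : chom W U) s :
  ptmap p g w = u -> cls (germ_rel p Fr) (mk u s) = cls (germ_rel p Fr) (mk w (Fr g s)).
Proof using Fr_id Fr_comp.
  intro H. apply cls_gr. exists W, w, g, (cid W). simpl. rewrite ptmap_id, Fr_id. auto.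
Qed.

Lemma same U (u : pt p U) a b :
  cls (germ_rel p Fr) (mk u a) = cls (germ_rel p Fr) (mk u b) ->
  exists W (w : pt p W) (g : chom W U), ptmap p g w = u /\ Fr g a = Fr g b.
Proof using Fr_id Fr_comp.
  intro H. apply cls_gr in H. destruct H as [W [z [f [g [H1 [H2 H3]]]]]]. simpl in *.
  destruct (eqz H1 H2) as [W' [w' [h [E1 E2]]]].
  exists W', w', (ccomp f h). split; [eapply ptc; eauto|].
  rewrite E2 at 2. rewrite !Fr_comp, H3. reflexivity.
Qed.

Lemma same_r U (u : pt p U) W (w : pt p W) (g : chom W U) a b :
  ptmap p g w = u -> Fr g a = Fr g b ->
  cls (germ_rel p Fr) (mk u a) = cls (germ_rel p Fr) (mk u b).
Proof using Fr_id Fr_comp.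
  intros H E. rewrite (restr a H), (restr b H), E. reflexivity.
Qed.

Lemma rep (q : stalk p Fr) : exists U (u : pt p U) s, q = cls (germ_rel p Fr) (mk u s).
Proof using Fr_id Fr_comp.
  rewrite <- (repr_cls q). destruct (repr q) as [U [u s]]. exists U, u, s. reflexivity.
Qed.

End Germ.

Lemma stalk_map_cls (F G : S -> Type) (Fr : forall U V : S, chom V U -> F U -> F V)
  (Gr : forall U V : S, chom V U -> G U -> G V)
  (Fr_id : forall U s, Fr _ _ (cid U) s = s)
  (Fr_comp : forall U V W (f : chom V U) (g : chom W V) s, Fr _ _ (ccomp f g) s = Fr _ _ g (Fr _ _ f s))
  (Gr_id : forall U s, Gr _ _ (cid U) s = s)
  (Gr_comp : forall U V W (f : chom V U) (g : chom W V) s, Gr _ _ (ccomp f g) s = Gr _ _ g (Gr _ _ f s))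
  (phi : forall U, F U -> G U) (nat : forall U V (h : chom V U) s, Gr _ _ h (phi U s) = phi V (Fr _ _ h s))
  U (u : pt p U) s :
  stalk_map p Fr Gr phi (cls (germ_rel p Fr) (mk u s)) = cls (germ_rel p Gr) (mk u (phi U s)).
Proof.
  unfold stalk_map.
  assert (H := repr_cls (cls (germ_rel p Fr) (mk u s))).
  destruct (repr (cls (germ_rel p Fr) (mk u s))) as [U' [u' s']]. simpl.
  apply (cls_gr Fr_id Fr_comp) in H. apply (cls_gr Gr_id Gr_comp).
  destruct H as [W [z [f [g [H1 [H2 H3]]]]]]. exists W, z, f, g. simpl in *.
  rewrite !nat, H3. auto.
Qed.

End Pt.

End M1.
Import M1.

Module M2.
Set Implicit Arguments.
Unset Strict Implicit.

Section Link.
Variables (S : Site) (p : Point S).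
Variables (F1 : S -> Type) (Fr1 : forall U V : S, chom V U -> F1 U -> F1 V)
  (Fr1_id : forall U s, Fr1 (cid U) s = s)
  (Fr1_comp : forall U V W (f : chom V U) (g : chom W V) s, Fr1 (ccomp f g) s = Fr1 g (Fr1 f s)).
Variables (F2 : S -> Type) (Fr2 : forall U V : S, chom V U -> F2 U -> F2 V)
  (Fr2_id : forall U s, Fr2 (cid U) s = s)
  (Fr2_comp : forall U V W (f : chom V U) (g : chom W V) s, Fr2 (ccomp f g) s = Fr2 g (Fr2 f s)).

Lemma link1 W (z : pt p W) U (u : pt p U) (x : F1 W) (y : F1 U) :
  cls (germ_rel p Fr1) (mk z x) = cls (germ_rel p Fr1) (mk u y) ->
  exists V (v : pt p V) (k : chom V W) (l : chom V U),
    ptmap p k v = z /\ ptmap p l v = u /\ Fr1 k x = Fr1 l y.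
Proof using Fr1_id Fr1_comp.
  intro H. apply (cls_gr Fr1_id Fr1_comp) in H.
  destruct H as [V [v [k [l [H1 [H2 H3]]]]]]. exists V, v, k, l. auto.
Qed.

Lemma link2same W (z : pt p W) U (u : pt p U) (x1 : F1 W) (y1 : F1 U) (x2 : F2 W) (y2 : F2 U) :
  cls (germ_rel p Fr1) (mk z x1) = cls (germ_rel p Fr1) (mk u y1) ->
  cls (germ_rel p Fr2) (mk z x2) = cls (germ_rel p Fr2) (mk u y2) ->
  exists V (v : pt p V) (k : chom V W) (l : chom V U),
    ptmap p k v = z /\ ptmap p l v = u /\ Fr1 k x1 = Fr1 l y1 /\ Fr2 k x2 = Fr2 l y2.
Proof using Fr1_id Fr1_comp Fr2_id Fr2_comp.
  intros H1 H2.
  apply (cls_gr Fr1_id Fr1_comp) in H1. apply (cls_gr Fr2_id Fr2_comp) in H2.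
  destruct H1 as [V1 [v1 [k1 [l1 [A1 [A2 A3]]]]]].
  destruct H2 as [V2 [v2 [k2 [l2 [B1 [B2 B3]]]]]]. simpl in *.
  destruct (cone2 v1 v2) as [V3 [v3 [m1 [m2 [C1 C2]]]]].
  destruct (@eqz S p _ _ z v3 (ccomp k1 m1) (ccomp k2 m2)) as [V4 [v4 [n [D1 D2]]]];
    [eapply ptc; eauto | eapply ptc; eauto |].
  destruct (@eqz S p _ _ u v4 (ccomp (ccomp l1 m1) n) (ccomp (ccomp l2 m2) n)) as [V5 [v5 [n' [E1 E2]]]];
    [eapply ptc; [eauto|eapply ptc; eauto] | eapply ptc; [eauto|eapply ptc; eauto] |].
  exists V5, v5, (ccomp (ccomp (ccomp k1 m1) n) n'), (ccomp (ccomp (ccomp l1 m1) n) n').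
  split; [eapply ptc; [eauto|eapply ptc; [eauto|eapply ptc; eauto]]|].
  split; [eapply ptc; [eauto|eapply ptc; [eauto|eapply ptc; eauto]]|].
  split.
  - rewrite !Fr1_comp, A3. reflexivity.
  - rewrite D2, E2. rewrite !Fr2_comp, B3. reflexivity.
Qed.

Lemma link2 W1 (z1 : pt p W1) W2 (z2 : pt p W2) U (u : pt p U)
  (x1 : F1 W1) (y1 : F1 U) (x2 : F2 W2) (y2 : F2 U) :
  cls (germ_rel p Fr1) (mk z1 x1) = cls (germ_rel p Fr1) (mk u y1) ->
  cls (germ_rel p Fr2) (mk z2 x2) = cls (germ_rel p Fr2) (mk u y2) ->
  exists V (v : pt p V) (k1 : chom V W1) (k2 : chom V W2) (l : chom V U),
    ptmap p k1 v = z1 /\ ptmap p k2 v = z2 /\ ptmap p l v = u /\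
    Fr1 k1 x1 = Fr1 l y1 /\ Fr2 k2 x2 = Fr2 l y2.
Proof using Fr1_id Fr1_comp Fr2_id Fr2_comp.
  intros H1 H2.
  apply (cls_gr Fr1_id Fr1_comp) in H1. apply (cls_gr Fr2_id Fr2_comp) in H2.
  destruct H1 as [V1 [v1 [k1 [l1 [A1 [A2 A3]]]]]].
  destruct H2 as [V2 [v2 [k2 [l2 [B1 [B2 B3]]]]]]. simpl in *.
  destruct (cone2 v1 v2) as [V3 [v3 [m1 [m2 [C1 C2]]]]].
  destruct (@eqz S p _ _ u v3 (ccomp l1 m1) (ccomp l2 m2)) as [V4 [v4 [n [D1 D2]]]];
    [eapply ptc; eauto | eapply ptc; eauto |].
  exists V4, v4, (ccomp (ccomp k1 m1) n), (ccomp (ccomp k2 m2) n), (ccomp (ccomp l1 m1) n).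
  split; [eapply ptc; [eauto|eapply ptc; eauto]|].
  split; [eapply ptc; [eauto|eapply ptc; eauto]|].
  split; [eapply ptc; [eauto|eapply ptc; eauto]|].
  split.
  - rewrite !Fr1_comp, A3. reflexivity.
  - rewrite D2, !Fr2_comp, B3. reflexivity.
Qed.

Lemma common (q1 : stalk p Fr1) (q2 : stalk p Fr2) :
  exists U (u : pt p U) s1 s2, q1 = cls (germ_rel p Fr1) (mk u s1) /\ q2 = cls (germ_rel p Fr2) (mk u s2).
Proof using Fr1_id Fr1_comp Fr2_id Fr2_comp.
  destruct (rep Fr1_id Fr1_comp q1) as [U1 [u1 [s1 ->]]]. destruct (rep Fr2_id Fr2_comp q2) as [U2 [u2 [s2 ->]]].
  destruct (cone2 u1 u2) as [W [w [g1 [g2 [H1 H2]]]]].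
  exists W, w, (Fr1 g1 s1), (Fr2 g2 s2).
  split; [apply (restr Fr1_id Fr1_comp) | apply (restr Fr2_id Fr2_comp)]; auto.
Qed.

Lemma common_st U (u : pt p U) (q : stalk p Fr2) :
  exists W (w : pt p W) (g : chom W U) s, ptmap p g w = u /\ q = cls (germ_rel p Fr2) (mk w s).
Proof using Fr2_id Fr2_comp.
  destruct (rep Fr2_id Fr2_comp q) as [U1 [u1 [s1 ->]]].
  destruct (cone2 u u1) as [W [w [g1 [g2 [H1 H2]]]]].
  exists W, w, g1, (Fr2 g2 s1). split; auto. apply (restr Fr2_id Fr2_comp); auto.
Qed.

End Link.

End M2.
Import M2.

Module M3.
Set Implicit Arguments.
Unset Strict Implicit.

Section StalkGpd.
Variables (S : Site) (p : Point S) (X : PrePGpd S) (HX : is_pgpd X).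

Lemma oR_id U s : obR X U U (cid U) s = s.
Proof. apply (res_id_o HX). Qed.
Lemma oR_comp U V W (f : chom V U) (g : chom W V) s : obR X _ _ (ccomp f g) s = obR X _ _ g (obR X _ _ f s).
Proof. apply (res_comp_o HX). Qed.
Lemma aR_id U s : arR X U U (cid U) s = s.
Proof. apply (res_id_a HX). Qed.
Lemma aR_comp U V W (f : chom V U) (g : chom W V) s : arR X _ _ (ccomp f g) s = arR X _ _ g (arR X _ _ f s).
Proof. apply (res_comp_a HX). Qed.

Definition O U (u : pt p U) (x : Ob (psec X U)) : Ob (stalk_gpd p X) :=
  cls (germ_rel p (obR X)) (@mk S p (obF X) U u x).
Definition A U (u : pt p U) (a : Arr (psec X U)) : Arr (stalk_gpd p X) :=
  cls (germ_rel p (arR X)) (@mk S p (arF X) U u a).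

Lemma o_restr U W (u : pt p U) (w : pt p W) (g : chom W U) x :
  ptmap p g w = u -> O u x = O w (fo (pres X g) x).
Proof. intro H. apply (restr oR_id oR_comp). auto. Qed.
Lemma a_restr U W (u : pt p U) (w : pt p W) (g : chom W U) x :
  ptmap p g w = u -> A u x = A w (fa (pres X g) x).
Proof. intro H. apply (restr aR_id aR_comp). auto. Qed.

Lemma o_same U (u : pt p U) x y : O u x = O u y ->
  exists W (w : pt p W) (g : chom W U), ptmap p g w = u /\ fo (pres X g) x = fo (pres X g) y.
Proof. intro H. apply (same oR_id oR_comp) in H. exact H. Qed.
Lemma a_same U (u : pt p U) x y : A u x = A u y ->
  exists W (w : pt p W) (g : chom W U), ptmap p g w = u /\ fa (pres X g) x = fa (pres X g) y.
Proof. intro H. apply (same aR_id aR_comp) in H. exact H. Qed.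

Lemma o_eq U (u : pt p U) W (w : pt p W) (g : chom W U) x y :
  ptmap p g w = u -> fo (pres X g) x = fo (pres X g) y -> O u x = O u y.
Proof. intros. apply (same_r oR_id oR_comp (g:=g) (w:=w)); auto. Qed.
Lemma a_eq U (u : pt p U) W (w : pt p W) (g : chom W U) x y :
  ptmap p g w = u -> fa (pres X g) x = fa (pres X g) y -> A u x = A u y.
Proof. intros. apply (same_r aR_id aR_comp (g:=g) (w:=w)); auto. Qed.

Lemma o_rep (q : Ob (stalk_gpd p X)) : exists U (u : pt p U) x, q = O u x.
Proof. apply (rep oR_id oR_comp). Qed.
Lemma a_rep (q : Arr (stalk_gpd p X)) : exists U (u : pt p U) x, q = A u x.
Proof. apply (rep aR_id aR_comp). Qed.

Lemma st_src U (u : pt p U) a : src (A u a) = O u (src a).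
Proof.
  apply (stalk_map_cls aR_id aR_comp oR_id oR_comp).
  intros. symmetry. apply (fun_src (res_fun HX h)).
Qed.
Lemma st_tgt U (u : pt p U) a : tgt (A u a) = O u (tgt a).
Proof.
  apply (stalk_map_cls aR_id aR_comp oR_id oR_comp).
  intros. symmetry. apply (fun_tgt (res_fun HX h)).
Qed.
Lemma st_idg U (u : pt p U) x : idg (O u x) = A u (idg x).
Proof.
  apply (stalk_map_cls oR_id oR_comp aR_id aR_comp).
  intros. apply (fun_id (res_fun HX h)).
Qed.

Lemma st_cmp U (u : pt p U) (a b : Arr (psec X U)) :
  src b = tgt a -> cmp (A u b) (A u a) = A u (cmp b a).
Proof.
  intro Hc. simpl. unfold stalk_cmp.
  generalize (repr_cls (A u a)) (repr_cls (A u b)).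
  destruct (repr (A u a)) as [Ua [ua sa]], (repr (A u b)) as [Ub [ub sb]]. simpl.
  intros Ha Hb.
  destruct (excluded_middle_informative _) as [h|h].
  - destruct (constructive_indefinite_description _ h) as [[W [[z f1] f2]] [T1 [T2 T3]]].
    simpl in *.
    assert (Ea : A z (fa (pres X f1) sa) = A u a).
    { rewrite <- Ha. symmetry. apply (restr aR_id aR_comp). auto. }
    assert (Eb : A z (fa (pres X f2) sb) = A u b).
    { rewrite <- Hb. symmetry. apply (restr aR_id aR_comp). auto. }
    destruct (link2same aR_id aR_comp aR_id aR_comp Ea Eb) as [V [v [k [l [K1 [K2 [K3 K4]]]]]]].
    change (A z (cmp (fa (pres X f2) sb) (fa (pres X f1) sa)) = A u (cmp b a)).
    rewrite (a_restr _ K1), (a_restr _ K2).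
    rewrite (fun_cmp (res_fun HX k)) by exact T3.
    rewrite (fun_cmp (res_fun HX l)) by exact Hc.
    unfold arR in K3, K4. rewrite K3, K4. reflexivity.
  - exfalso. apply h.
    destruct (link2 aR_id aR_comp aR_id aR_comp Ha Hb) as [V [v [k1 [k2 [l [K1 [K2 [K3 [K4 K5]]]]]]]]].
    exists (existT _ V (v, k1, k2)). simpl. split; auto. split; auto.
    unfold arR in K4, K5. rewrite K4, K5.
    rewrite (fun_src (res_fun HX l)), (fun_tgt (res_fun HX l)), Hc. reflexivity.
Qed.

End StalkGpd.

End M3.
Import M3.

Module M4.
Set Implicit Arguments.
Unset Strict Implicit.

Section StalkGpd2.
Variables (S : Site) (p : Point S) (X : PrePGpd S) (HX : is_pgpd X).

Lemma aa_common (q1 q2 : Arr (stalk_gpd p X)) :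
  exists U (u : pt p U) a b, q1 = A u a /\ q2 = A u b.
Proof. apply (common (aR_id HX) (aR_comp HX) (aR_id HX) (aR_comp HX)). Qed.

Lemma stage_a U (u : pt p U) (q : Arr (stalk_gpd p X)) :
  exists W (w : pt p W) (g : chom W U) a, ptmap p g w = u /\ q = A w a.
Proof. apply (common_st (aR_id HX) (aR_comp HX)). Qed.

Lemma stage_o U (u : pt p U) (q : Ob (stalk_gpd p X)) :
  exists W (w : pt p W) (g : chom W U) a, ptmap p g w = u /\ q = O w a.
Proof. apply (common_st (oR_id HX) (oR_comp HX)). Qed.

Lemma a2_common (b a : Arr (stalk_gpd p X)) : src b = tgt a ->
  exists U (u : pt p U) b0 a0, b = A u b0 /\ a = A u a0 /\ src b0 = tgt a0.
Proof.
  intro H. destruct (aa_common b a) as [U [u [b0 [a0 [-> ->]]]]].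
  rewrite (st_src HX), (st_tgt HX) in H. apply (o_same HX) in H as [W [w [k [K1 K2]]]].
  exists W, w, (fa (pres X k) b0), (fa (pres X k) a0).
  rewrite <- !(a_restr HX _ K1). split; auto. split; auto.
  rewrite (fun_src (res_fun HX k)), (fun_tgt (res_fun HX k)). exact K2.
Qed.

Lemma a3_common (c b a : Arr (stalk_gpd p X)) : src c = tgt b -> src b = tgt a ->
  exists U (u : pt p U) c0 b0 a0, c = A u c0 /\ b = A u b0 /\ a = A u a0 /\
    src c0 = tgt b0 /\ src b0 = tgt a0.
Proof.
  intros H1 H2. destruct (a2_common H1) as [U [u [c0 [b0 [-> [-> E1]]]]]].
  destruct (stage_a u a) as [W [w [k [a0 [K1 ->]]]]].
  rewrite (a_restr HX b0 K1) in H2.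
  rewrite (st_src HX), (st_tgt HX) in H2. apply (o_same HX) in H2 as [W2 [w2 [k2 [K2 K3]]]].
  exists W2, w2, (fa (pres X (ccomp k k2)) c0), (fa (pres X (ccomp k k2)) b0), (fa (pres X k2) a0).
  assert (K4 : ptmap p (ccomp k k2) w2 = u) by (eapply ptc; eauto).
  rewrite <- !(a_restr HX _ K4), <- !(a_restr HX _ K2).
  split; auto. split; auto. split; auto. split.
  - rewrite (fun_src (res_fun HX _)), (fun_tgt (res_fun HX _)), E1. reflexivity.
  - rewrite (res_comp_a HX), (fun_src (res_fun HX _)), (fun_tgt (res_fun HX _)).
    exact K3.
Qed.

Lemma stalk_is_gpd : is_gpd (stalk_gpd p X).
Proof.
  constructor.
  - intro x. destruct (o_rep HX x) as [U [u [x0 ->]]].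
    rewrite (st_idg HX), (st_src HX), (src_id (sec_gpd HX U)). reflexivity.
  - intro x. destruct (o_rep HX x) as [U [u [x0 ->]]].
    rewrite (st_idg HX), (st_tgt HX), (tgt_id (sec_gpd HX U)). reflexivity.
  - intros g f H. destruct (a2_common H) as [U [u [b [a [-> [-> E]]]]]].
    rewrite (st_cmp HX) by exact E. rewrite !(st_src HX), (src_cmp (sec_gpd HX U) E). reflexivity.
  - intros g f H. destruct (a2_common H) as [U [u [b [a [-> [-> E]]]]]].
    rewrite (st_cmp HX) by exact E. rewrite !(st_tgt HX), (tgt_cmp (sec_gpd HX U) E). reflexivity.
  - intro f. destruct (a_rep HX f) as [U [u [a ->]]].
    rewrite (st_tgt HX), (st_idg HX), (st_cmp HX) by apply (src_id (sec_gpd HX U)).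
    rewrite (cmp_id_l (sec_gpd HX U)). reflexivity.
  - intro f. destruct (a_rep HX f) as [U [u [a ->]]].
    rewrite (st_src HX), (st_idg HX), (st_cmp HX) by (symmetry; apply (tgt_id (sec_gpd HX U))).
    rewrite (cmp_id_r (sec_gpd HX U)). reflexivity.
  - intros h g f H1 H2. destruct (a3_common H1 H2) as [U [u [c [b [a [-> [-> [-> [E1 E2]]]]]]]]].
    rewrite !(st_cmp HX); auto.
    + rewrite (cmp_assoc (sec_gpd HX U)); auto.
    + rewrite (src_cmp (sec_gpd HX U)); auto.
    + rewrite (tgt_cmp (sec_gpd HX U)); auto.
  - intro f. destruct (a_rep HX f) as [U [u [a ->]]].
    destruct (has_inv (sec_gpd HX U) a) as [b [B1 [B2 [B3 B4]]]].
    exists (A u b). rewrite !(st_src HX), !(st_tgt HX), !(st_cmp HX) by auto.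
    rewrite B1, B2, B3, B4, !(st_idg HX). auto.
Qed.

End StalkGpd2.

Section StalkFun.
Variables (S : Site) (p : Point S) (X Y : PrePGpd S) (HX : is_pgpd X) (HY : is_pgpd Y)
  (f : PreMor X Y) (Hf : is_mor f).

Lemma sf_o U (u : pt p U) x : fo (stalk_fun p f) (O u x) = O u (fo (mc f U) x).
Proof.
  apply (stalk_map_cls (oR_id HX) (oR_comp HX) (oR_id HY) (oR_comp HY)).
  intros. apply (mor_nat_o Hf).
Qed.
Lemma sf_a U (u : pt p U) x : fa (stalk_fun p f) (A u x) = A u (fa (mc f U) x).
Proof.
  apply (stalk_map_cls (aR_id HX) (aR_comp HX) (aR_id HY) (aR_comp HY)).
  intros. apply (mor_nat_a Hf).
Qed.

Lemma stalk_fun_is_fun : is_fun (stalk_fun p f).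
Proof.
  constructor.
  - intro a. destruct (a_rep HX a) as [U [u [a0 ->]]].
    rewrite sf_a, !(st_src HY), (st_src HX), sf_o, (fun_src (mor_fun Hf U)). reflexivity.
  - intro a. destruct (a_rep HX a) as [U [u [a0 ->]]].
    rewrite sf_a, !(st_tgt HY), (st_tgt HX), sf_o, (fun_tgt (mor_fun Hf U)). reflexivity.
  - intro x. destruct (o_rep HX x) as [U [u [x0 ->]]].
    rewrite (st_idg HX), sf_a, sf_o, (st_idg HY), (fun_id (mor_fun Hf U)). reflexivity.
  - intros g a H. destruct (a2_common HX H) as [U [u [b0 [a0 [-> [-> E]]]]]].
    rewrite (st_cmp HX) by exact E. rewrite !sf_a.
    rewrite (st_cmp HY). 2: rewrite (fun_src (mor_fun Hf U)), (fun_tgt (mor_fun Hf U)), E; reflexivity.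
    rewrite (fun_cmp (mor_fun Hf U) E). reflexivity.
Qed.

End StalkFun.

End M4.
Import M4.

Module M5.
Set Implicit Arguments.
Unset Strict Implicit.

Definition SF (G H : PreGpd) (F : PreFun G H) : Prop :=
  forall a b, src a = src b -> tgt a = tgt b -> fa F a = fa F b -> a = b.
Definition SFull (G H : PreGpd) (F : PreFun G H) : Prop :=
  forall x x1 b, src b = fo F x -> tgt b = fo F x1 ->
    exists a, src a = x /\ tgt a = x1 /\ fa F a = b.
Definition SES (G H : PreGpd) (F : PreFun G H) : Prop :=
  forall y, exists x e, src e = fo F x /\ tgt e = y.

Definition LF (S : Site) (p : Point S) (X Y : PrePGpd S) (f : PreMor X Y) : Prop :=
  forall U (u : pt p U) (a b : Arr (psec X U)), src a = src b -> tgt a = tgt b ->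
    fa (mc f U) a = fa (mc f U) b ->
    exists W (w : pt p W) (g : chom W U), ptmap p g w = u /\ fa (pres X g) a = fa (pres X g) b.
Definition LFull (S : Site) (p : Point S) (X Y : PrePGpd S) (f : PreMor X Y) : Prop :=
  forall U (u : pt p U) (x x1 : Ob (psec X U)) (b : Arr (psec Y U)),
    src b = fo (mc f U) x -> tgt b = fo (mc f U) x1 ->
    exists W (w : pt p W) (g : chom W U) (a : Arr (psec X W)), ptmap p g w = u /\
      src a = fo (pres X g) x /\ tgt a = fo (pres X g) x1 /\ fa (mc f W) a = fa (pres Y g) b.
Definition LES (S : Site) (p : Point S) (X Y : PrePGpd S) (f : PreMor X Y) : Prop :=
  forall U (u : pt p U) (y : Ob (psec Y U)),
    exists W (w : pt p W) (g : chom W U) (x : Ob (psec X W)) (e : Arr (psec Y W)),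
      ptmap p g w = u /\ src e = fo (mc f W) x /\ tgt e = fo (pres Y g) y.

Section Loc.
Variables (S : Site) (p : Point S) (X Y : PrePGpd S) (HX : is_pgpd X) (HY : is_pgpd Y)
  (f : PreMor X Y) (Hf : is_mor f).

Lemma o_same_r (Z : PrePGpd S) (HZ : is_pgpd Z) U (u : pt p U) W (w : pt p W) (g : chom W U) x y :
  ptmap p g w = u -> O u x = O u y -> O w (fo (pres Z g) x) = O w (fo (pres Z g) y).
Proof. intros K E. rewrite <- !(o_restr HZ _ K). exact E. Qed.
Lemma a_same_r (Z : PrePGpd S) (HZ : is_pgpd Z) U (u : pt p U) W (w : pt p W) (g : chom W U) x y :
  ptmap p g w = u -> A u x = A u y -> A w (fa (pres Z g) x) = A w (fa (pres Z g) y).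
Proof. intros K E. rewrite <- !(a_restr HZ _ K). exact E. Qed.

Lemma nat_o U V (h : chom V U) x : fo (pres Y h) (fo (mc f U) x) = fo (mc f V) (fo (pres X h) x).
Proof. apply (mor_nat_o Hf). Qed.
Lemma nat_a U V (h : chom V U) x : fa (pres Y h) (fa (mc f U) x) = fa (mc f V) (fa (pres X h) x).
Proof. apply (mor_nat_a Hf). Qed.

Lemma SF_LF : SF (stalk_fun p f) -> LF p f.
Proof.
  intros H U u a b E1 E2 E3.
  assert (E : A u a = A u b).
  { apply H.
    - rewrite !(st_src HX), E1. reflexivity.
    - rewrite !(st_tgt HX), E2. reflexivity.
    - rewrite !(sf_a HX HY Hf), E3. reflexivity. }
  apply (a_same HX) in E. exact E.
Qed.

Lemma SFull_LFull : SF (stalk_fun p f) -> SFull (stalk_fun p f) -> LFull p f.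
Proof.
  intros H0 H U u x x1 b E1 E2.
  destruct (H (O u x) (O u x1) (A u b)) as [a [A1 [A2 A3]]].
  - rewrite (st_src HY), (sf_o HX HY Hf), E1. reflexivity.
  - rewrite (st_tgt HY), (sf_o HX HY Hf), E2. reflexivity.
  - destruct (stage_a HX u a) as [V [v [g [a0 [G ->]]]]].
    rewrite (st_src HX), (o_restr HX x G) in A1.
    rewrite (st_tgt HX), (o_restr HX x1 G) in A2.
    rewrite (sf_a HX HY Hf), (a_restr HY b G) in A3.
    apply (o_same HX) in A1. destruct A1 as [W1 [w1 [k1 [K1 F1]]]].
    apply (o_same_r HX K1) in A2. apply (o_same HX) in A2. destruct A2 as [W2 [w2 [k2 [K2 F2]]]].
    apply (a_same_r HY K1) in A3. apply (a_same_r HY K2) in A3.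
    apply (a_same HY) in A3. destruct A3 as [W3 [w3 [k3 [K3 F3]]]].
    exists W3, w3, (ccomp g (ccomp k1 (ccomp k2 k3))),
      (fa (pres X (ccomp k1 (ccomp k2 k3))) a0).
    split; [eapply ptc; [eapply ptc; [eapply ptc; eauto|eauto]|eauto]|].
    rewrite !(res_comp_o HX), !(res_comp_a HX), !(res_comp_a HY).
    rewrite (fun_src (res_fun HX _)), (fun_src (res_fun HX _)), (fun_src (res_fun HX _)), F1.
    rewrite (fun_tgt (res_fun HX _)), (fun_tgt (res_fun HX _)), (fun_tgt (res_fun HX _)), F2.
    split; auto. split; auto.
    rewrite <- !nat_a. exact F3.
Qed.

Lemma SES_LES : SES (stalk_fun p f) -> LES p f.
Proof.
  intros H U u y.
  destruct (H (O u y)) as [x [e [E1 E2]]].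
  destruct (o_rep HX x) as [V [v [x0 ->]]].
  destruct (stage_a HY v e) as [W [w [g [e0 [G ->]]]]].
  rewrite (st_src HY), (sf_o HX HY Hf), (o_restr HY _ G) in E1.
  rewrite (st_tgt HY) in E2.
  apply (o_same HY) in E1. destruct E1 as [W1 [w1 [k1 [K1 F1]]]].
  rewrite (o_restr HY _ K1) in E2.
  destruct (link1 (oR_id HY) (oR_comp HY) E2) as [V2 [v2 [k [l [L1 [L2 L3]]]]]].
  exists V2, v2, l, (fo (pres X (ccomp k1 k)) (fo (pres X g) x0)), (fa (pres Y (ccomp k1 k)) e0).
  split; auto. split.
  - rewrite (fun_src (res_fun HY _)), (res_comp_o HY), F1, !nat_o, (res_comp_o HX). reflexivity.
  - rewrite (fun_tgt (res_fun HY _)), (res_comp_o HY). exact L3.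
Qed.


Lemma LF_SF : LF p f -> SF (stalk_fun p f).
Proof.
  intros H a b E1 E2 E3. destruct (aa_common HX a b) as [U [u [a0 [b0 [-> ->]]]]].
  rewrite !(st_src HX) in E1. rewrite !(st_tgt HX) in E2. rewrite !(sf_a HX HY Hf) in E3.
  apply (o_same HX) in E1. destruct E1 as [W1 [w1 [k1 [K1 F1]]]].
  apply (o_same_r HX K1) in E2. apply (o_same HX) in E2. destruct E2 as [W2 [w2 [k2 [K2 F2]]]].
  apply (a_same_r HY K1) in E3. apply (a_same_r HY K2) in E3.
  apply (a_same HY) in E3. destruct E3 as [W3 [w3 [k3 [K3 F3]]]].
  destruct (H W3 w3 (fa (pres X (ccomp k1 (ccomp k2 k3))) a0) (fa (pres X (ccomp k1 (ccomp k2 k3))) b0))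
    as [W4 [w4 [k4 [K4 F4]]]].
  - rewrite !(fun_src (res_fun HX _)), !(res_comp_o HX), F1. reflexivity.
  - rewrite !(fun_tgt (res_fun HX _)), !(res_comp_o HX), F2. reflexivity.
  - rewrite !(res_comp_a HX), <- !nat_a, F3. reflexivity.
  - apply (a_eq HX (g := ccomp (ccomp k1 (ccomp k2 k3)) k4) (w := w4)).
    + eapply ptc; [eauto|]. eapply ptc; [eapply ptc; [eauto|eauto]|eauto].
    + rewrite (res_comp_a HX (ccomp k1 (ccomp k2 k3)) k4), (res_comp_a HX (ccomp k1 (ccomp k2 k3)) k4). exact F4.
Qed.

Lemma LFull_SFull : LFull p f -> SFull (stalk_fun p f).
Proof.
  intros H x x1 b Hs Ht.
  destruct (o_rep HX x) as [U [u [x0 ->]]].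
  destruct (stage_o HX u x1) as [U1 [u1 [g1 [x10 [G1 ->]]]]].
  destruct (stage_a HY u1 b) as [V [v [g2 [b0 [G2 ->]]]]].
  assert (G3 : ptmap p (ccomp g1 g2) v = u) by (eapply ptc; eauto).
  rewrite (o_restr HX x0 G3), (o_restr HX x10 G2) in *.
  set (x0' := fo (pres X (ccomp g1 g2)) x0) in *.
  set (x10' := fo (pres X g2) x10) in *.
  rewrite (st_src HY), (sf_o HX HY Hf) in Hs. rewrite (st_tgt HY), (sf_o HX HY Hf) in Ht.
  apply (o_same HY) in Hs. destruct Hs as [W1 [w1 [k1 [K1 F1]]]].
  apply (o_same_r HY K1) in Ht. apply (o_same HY) in Ht. destruct Ht as [W2 [w2 [k2 [K2 F2]]]].
  destruct (H W2 w2 (fo (pres X (ccomp k1 k2)) x0') (fo (pres X (ccomp k1 k2)) x10')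
     (fa (pres Y (ccomp k1 k2)) b0)) as [W3 [w3 [g3 [a [L1 [L2 [L3 L4]]]]]]].
  - rewrite (fun_src (res_fun HY _)), (res_comp_o HY), F1, <- (res_comp_o HY), nat_o. reflexivity.
  - rewrite (fun_tgt (res_fun HY _)), (res_comp_o HY), F2, <- (res_comp_o HY), nat_o. reflexivity.
  - assert (K : ptmap p (ccomp (ccomp k1 k2) g3) w3 = v).
    { eapply ptc; [eauto|]. eapply ptc; eauto. }
    exists (A w3 a). split; [|split].
    + rewrite (st_src HX), L2, (o_restr HX x0' K), !(res_comp_o HX). reflexivity.
    + rewrite (st_tgt HX), L3, (o_restr HX x10' K), !(res_comp_o HX). reflexivity.
    + rewrite (sf_a HX HY Hf), L4, (a_restr HY b0 K), !(res_comp_a HY). reflexivity.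
Qed.

Lemma LES_SES : LES p f -> SES (stalk_fun p f).
Proof.
  intros H y. destruct (o_rep HY y) as [U [u [y0 ->]]].
  destruct (H U u y0) as [W [w [g [x [e [G [E1 E2]]]]]]].
  exists (O w x), (A w e). split.
  - rewrite (st_src HY), (sf_o HX HY Hf), E1. reflexivity.
  - rewrite (st_tgt HY), E2, <- (o_restr HY _ G). reflexivity.
Qed.

End Loc.

End M5.
Import M5.

Module M6.
Set Implicit Arguments.
Unset Strict Implicit.

Section GpdBasics.
Variables (G : PreGpd) (HG : is_gpd G).

Definition ginv (a : Arr G) : Arr G := proj1_sig (constructive_indefinite_description _ (has_inv HG a)).
Lemma ginv_spec (a : Arr G) : src (ginv a) = tgt a /\ tgt (ginv a) = src a /\
  cmp (ginv a) a = idg (src a) /\ cmp a (ginv a) = idg (tgt a).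
Proof. unfold ginv. destruct (constructive_indefinite_description _ _) as [b Hb]. exact Hb. Qed.
Lemma ginv_src (a : Arr G) : src (ginv a) = tgt a. Proof. apply ginv_spec. Qed.
Lemma ginv_tgt (a : Arr G) : tgt (ginv a) = src a. Proof. apply ginv_spec. Qed.
Lemma ginv_l (a : Arr G) : cmp (ginv a) a = idg (src a). Proof. apply ginv_spec. Qed.
Lemma ginv_r (a : Arr G) : cmp a (ginv a) = idg (tgt a). Proof. apply ginv_spec. Qed.

Lemma cancel_l (g f f' : Arr G) : src g = tgt f -> tgt f' = tgt f -> cmp g f = cmp g f' -> f = f'.
Proof.
  intros H1 H2 E.
  rewrite <- (cmp_id_l HG f), <- (cmp_id_l HG f'), H2, <- H1, <- ginv_l.
  rewrite <- !(cmp_assoc HG); try rewrite ginv_src; congruence.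
Qed.

Lemma cancel_r (g g' f : Arr G) : src g = tgt f -> src g' = tgt f -> cmp g f = cmp g' f -> g = g'.
Proof.
  intros H1 H2 E.
  rewrite <- (cmp_id_r HG g), <- (cmp_id_r HG g'), H1, H2, <- ginv_r.
  rewrite !(cmp_assoc HG); try rewrite ginv_tgt; congruence.
Qed.

Lemma all_iso (a : Arr G) : is_iso a.
Proof. apply (has_inv HG). Qed.

End GpdBasics.

End M6.
Import M6.

Module M7.
Set Implicit Arguments.
Unset Strict Implicit.

Section EquivToFF.
Variables (G H : PreGpd) (HG : is_gpd G) (HH : is_gpd H) (F : PreFun G H) (HF : is_fun F)
  (K : PreFun H G) (HK : is_fun K) (eta : Ob G -> Arr G) (eps : Ob H -> Arr H)
  (Heta : nat_iso (idF G) (compF K F) eta) (Heps : nat_iso (compF F K) (idF H) eps).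

Lemma eta_src x : src (eta x) = x. Proof. apply (proj1 Heta x). Qed.
Lemma eta_tgt x : tgt (eta x) = fo K (fo F x). Proof. apply (proj1 Heta x). Qed.
Lemma eta_nat a : cmp (eta (tgt a)) a = cmp (fa K (fa F a)) (eta (src a)). Proof. apply (proj2 Heta a). Qed.
Lemma eps_src y : src (eps y) = fo F (fo K y). Proof. apply (proj1 Heps y). Qed.
Lemma eps_tgt y : tgt (eps y) = y. Proof. apply (proj1 Heps y). Qed.
Lemma eps_nat b : cmp (eps (tgt b)) (fa F (fa K b)) = cmp b (eps (src b)). Proof. apply (proj2 Heps b). Qed.

Ltac st := repeat progress (rewrite ?eta_src, ?eta_tgt, ?eps_src, ?eps_tgt, ?(fun_src HF), ?(fun_tgt HF),
   ?(fun_src HK), ?(fun_tgt HK), ?(ginv_src HG), ?(ginv_tgt HG), ?(ginv_src HH), ?(ginv_tgt HH),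
   ?(src_id HG), ?(tgt_id HG), ?(src_id HH), ?(tgt_id HH);
   try (rewrite (src_cmp HG) by st); try (rewrite (tgt_cmp HG) by st);
   try (rewrite (src_cmp HH) by st); try (rewrite (tgt_cmp HH) by st)); congruence.

Lemma eq_SES : SES F.
Proof. intro y. exists (fo K y), (eps y). split; [apply eps_src | apply eps_tgt]. Qed.

Lemma eq_SF : SF F.
Proof.
  intros a b E1 E2 E3. apply (cancel_l HG (g := eta (tgt a))); [st|st|].
  rewrite (eta_nat a), E2, (eta_nat b), E3, E1. reflexivity.
Qed.

Lemma eq_KF (c d : Arr H) : src c = src d -> tgt c = tgt d -> fa K c = fa K d -> c = d.
Proof.
  intros E1 E2 E3. apply (cancel_r HH (f := eps (src c))); [st|st|].
  rewrite <- (eps_nat c), E1, <- (eps_nat d), E2, E3. reflexivity.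
Qed.

Lemma eq_SFull : SFull F.
Proof.
  intros x x1 b E1 E2.
  set (a := cmp (ginv HG (eta x1)) (cmp (fa K b) (eta x))).
  assert (Sa : src a = x) by (unfold a; st).
  assert (Ta : tgt a = x1) by (unfold a; st).
  exists a. split; auto. split; auto.
  apply eq_KF; [st|st|].
  apply (cancel_r HG (f := eta x)); [st|st|].
  rewrite <- Sa at 1. rewrite <- eta_nat, Ta. unfold a.
  rewrite (cmp_assoc HG) by st. rewrite (ginv_r HG).
  replace (tgt (eta x1)) with (tgt (cmp (fa K b) (eta x))) by st. apply (cmp_id_l HG).
Qed.

End EquivToFF.

End M7.
Import M7.

Module M8.
Set Implicit Arguments.
Unset Strict Implicit.

Section GpdMore.
Variables (G : PreGpd) (HG : is_gpd G).
Lemma cmp_id_l' (f : Arr G) x : tgt f = x -> cmp (idg x) f = f.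
Proof. intros <-. apply (cmp_id_l HG). Qed.
Lemma cmp_id_r' (f : Arr G) x : src f = x -> cmp f (idg x) = f.
Proof. intros <-. apply (cmp_id_r HG). Qed.
Lemma ginv_r_assoc (e X : Arr G) : tgt X = tgt e -> cmp e (cmp (ginv HG e) X) = X.
Proof.
  intro H. rewrite (cmp_assoc HG) by (rewrite ?(ginv_src HG), ?(ginv_tgt HG); auto).
  rewrite (ginv_r HG). apply cmp_id_l'. auto.
Qed.
Lemma ginv_l_assoc (e X : Arr G) : tgt X = src e -> cmp (ginv HG e) (cmp e X) = X.
Proof.
  intro H. rewrite (cmp_assoc HG) by (rewrite ?(ginv_src HG), ?(ginv_tgt HG); auto).
  rewrite (ginv_l HG). apply cmp_id_l'. auto.
Qed.
End GpdMore.

Section FFToEquiv.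
Variables (G H : PreGpd) (HG : is_gpd G) (HH : is_gpd H) (F : PreFun G H) (HF : is_fun F)
  (Hsf : SF F) (Hsfull : SFull F) (Hses : SES F).

Definition xo (y : Ob H) : Ob G := proj1_sig (constructive_indefinite_description _ (Hses y)).
Definition eo (y : Ob H) : Arr H :=
  proj1_sig (constructive_indefinite_description _ (proj2_sig (constructive_indefinite_description _ (Hses y)))).
Lemma eo_spec y : src (eo y) = fo F (xo y) /\ tgt (eo y) = y.
Proof.
  unfold eo, xo. destruct (constructive_indefinite_description _ (Hses y)) as [x Hx]. simpl.
  destruct (constructive_indefinite_description _ Hx) as [e He]. exact He.
Qed.
Lemma eo_src y : src (eo y) = fo F (xo y). Proof. apply eo_spec. Qed.
Lemma eo_tgt y : tgt (eo y) = y. Proof. apply eo_spec. Qed.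

Definition liftP (x x1 : Ob G) (b : Arr H) (a : Arr G) : Prop := src a = x /\ tgt a = x1 /\ fa F a = b.
Definition lift (x x1 : Ob G) (b : Arr H) : Arr G := epsilon (inhabits (idg x)) (liftP x x1 b).
Lemma lift_spec x x1 b : src b = fo F x -> tgt b = fo F x1 -> liftP x x1 b (lift x x1 b).
Proof. intros H1 H2. unfold lift. apply epsilon_spec. apply Hsfull; auto. Qed.

Definition Ka (b : Arr H) : Arr G :=
  lift (xo (src b)) (xo (tgt b)) (cmp (ginv HH (eo (tgt b))) (cmp b (eo (src b)))).
Definition Kf : PreFun H G := {| fo := xo; fa := Ka |}.
Definition etaf (x : Ob G) : Arr G := lift x (xo (fo F x)) (ginv HH (eo (fo F x))).

Ltac st := repeat progress (rewrite ?eo_src, ?eo_tgt, ?(fun_src HF), ?(fun_tgt HF),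
   ?(ginv_src HG), ?(ginv_tgt HG), ?(ginv_src HH), ?(ginv_tgt HH),
   ?(src_id HG), ?(tgt_id HG), ?(src_id HH), ?(tgt_id HH);
   try (rewrite (src_cmp HG) by st); try (rewrite (tgt_cmp HG) by st);
   try (rewrite (src_cmp HH) by st); try (rewrite (tgt_cmp HH) by st)); congruence.

Lemma Ka_spec b : liftP (xo (src b)) (xo (tgt b)) (cmp (ginv HH (eo (tgt b))) (cmp b (eo (src b)))) (Ka b).
Proof. apply lift_spec; st. Qed.
Lemma Ka_src b : src (Ka b) = xo (src b). Proof. apply Ka_spec. Qed.
Lemma Ka_tgt b : tgt (Ka b) = xo (tgt b). Proof. apply Ka_spec. Qed.
Lemma Ka_F b : fa F (Ka b) = cmp (ginv HH (eo (tgt b))) (cmp b (eo (src b))). Proof. apply Ka_spec. Qed.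

Lemma eta_spec x : liftP x (xo (fo F x)) (ginv HH (eo (fo F x))) (etaf x).
Proof. apply lift_spec; st. Qed.
Lemma etaf_src x : src (etaf x) = x. Proof. apply eta_spec. Qed.
Lemma etaf_tgt x : tgt (etaf x) = xo (fo F x). Proof. apply eta_spec. Qed.
Lemma etaf_F x : fa F (etaf x) = ginv HH (eo (fo F x)). Proof. apply eta_spec. Qed.

Ltac st2 := repeat progress (rewrite ?eo_src, ?eo_tgt, ?(fun_src HF), ?(fun_tgt HF),
   ?Ka_src, ?Ka_tgt, ?etaf_src, ?etaf_tgt,
   ?(ginv_src HG), ?(ginv_tgt HG), ?(ginv_src HH), ?(ginv_tgt HH),
   ?(src_id HG), ?(tgt_id HG), ?(src_id HH), ?(tgt_id HH);
   try (rewrite (src_cmp HG) by st2); try (rewrite (tgt_cmp HG) by st2);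
   try (rewrite (src_cmp HH) by st2); try (rewrite (tgt_cmp HH) by st2)); congruence.

Lemma Kf_fun : is_fun Kf.
Proof.
  constructor; simpl.
  - apply Ka_src.
  - apply Ka_tgt.
  - intro y. apply Hsf; [st2|st2|].
    rewrite Ka_F, (fun_id HF), (src_id HH), (tgt_id HH).
    rewrite (cmp_id_l' HH) by st2. rewrite (ginv_l HH). f_equal. st2.
  - intros g f Hc. apply Hsf; [st2|st2|].
    rewrite (fun_cmp HF) by st2. rewrite !Ka_F.
    rewrite <- !(cmp_assoc HH) by st2.
    rewrite (tgt_cmp HH Hc), (src_cmp HH Hc), Hc, (ginv_r_assoc HH) by st2. reflexivity.
Qed.

Lemma etaf_nat : nat_iso (idF G) (compF Kf F) etaf.
Proof.
  split.
  - intro x. simpl. split; [apply etaf_src|]. split; [apply etaf_tgt|]. apply (all_iso HG).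
  - intro a. simpl. apply Hsf; [st2|st2|].
    rewrite !(fun_cmp HF) by st2. rewrite Ka_F, !etaf_F.
    rewrite <- !(cmp_assoc HH) by st2.
    rewrite (fun_src HF), (fun_tgt HF), (ginv_r HH), (cmp_id_r' HH) by st2. reflexivity.
Qed.

Lemma eps_nat' : nat_iso (compF F Kf) (idF H) eo.
Proof.
  split.
  - intro y. simpl. split; [apply eo_src|]. split; [apply eo_tgt|]. apply (all_iso HH).
  - intro b. simpl. rewrite Ka_F, (ginv_r_assoc HH) by st2. reflexivity.
Qed.

Lemma ff_equiv : is_equivalence F.
Proof.
  exists Kf, etaf, eo. split; [apply Kf_fun|]. split; [apply etaf_nat | apply eps_nat'].
Qed.

End FFToEquiv.

End M8.
Import M8.

Module M9.
Set Implicit Arguments.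
Unset Strict Implicit.

Lemma hob_eq (G : PreGpd) (t : PreFun G G) (o1 o2 : hob t) : proj1_sig o1 = proj1_sig o2 -> o1 = o2.
Proof. destruct o1, o2. simpl. intro. apply subset_eq_compat. auto. Qed.
Lemma harr_eq (G : PreGpd) (t : PreFun G G) (a1 a2 : harr t) : proj1_sig a1 = proj1_sig a2 -> a1 = a2.
Proof. destruct a1, a2. simpl. intro. apply subset_eq_compat. auto. Qed.

Section HfpGpd.
Variables (G : PreGpd) (HG : is_gpd G) (t : PreFun G G) (Ht : is_fun t).

Lemma hcmp_eq (g f : harr t) : fst (fst (proj1_sig g)) = snd (fst (proj1_sig f)) ->
  proj1_sig (hcmp HG Ht g f) = (fst (fst (proj1_sig f)), snd (fst (proj1_sig g)),
     cmp (snd (proj1_sig g)) (snd (proj1_sig f))).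
Proof. intro H. unfold hcmp. destruct (excluded_middle_informative _); [reflexivity | contradiction]. Qed.

Ltac st := repeat progress (rewrite ?(fun_src Ht), ?(fun_tgt Ht),
   ?(ginv_src HG), ?(ginv_tgt HG), ?(src_id HG), ?(tgt_id HG);
   try (rewrite (src_cmp HG) by st); try (rewrite (tgt_cmp HG) by st)); congruence.

Lemma hfp_is_gpd : is_gpd (hfp_gpd HG Ht).
Proof.
  constructor; simpl.
  - reflexivity.
  - reflexivity.
  - intros g f Hc. unfold hcmp. destruct (excluded_middle_informative _); [reflexivity | contradiction].
  - intros g f Hc. unfold hcmp. destruct (excluded_middle_informative _); [reflexivity | contradiction].
  - intro f. apply harr_eq. rewrite hcmp_eq by reflexivity.
    destruct f as [[[o1 o2] a] [P1 [P2 P3]]]. simpl in *. f_equal.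
    rewrite <- P2. apply (cmp_id_l HG).
  - intro f. apply harr_eq. rewrite hcmp_eq by reflexivity.
    destruct f as [[[o1 o2] a] [P1 [P2 P3]]]. simpl in *. f_equal.
    rewrite <- P1. apply (cmp_id_r HG).
  - intros h g f H1 H2. apply harr_eq.
    rewrite (hcmp_eq (g:=h) (f:=hcmp HG Ht g f)) by (rewrite hcmp_eq; auto).
    rewrite (hcmp_eq (g:=g) (f:=f)) by auto.
    rewrite (hcmp_eq (g:=hcmp HG Ht h g) (f:=f)) by (rewrite hcmp_eq; auto).
    rewrite (hcmp_eq (g:=h) (f:=g)) by auto. simpl.
    destruct h as [[[o5 o6] c] [R1 [R2 R3]]].
    destruct g as [[[o3 o4] b] [Q1 [Q2 Q3]]].
    destruct f as [[[o1 o2] a] [P1 [P2 P3]]]. simpl in *. subst.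
    f_equal. apply (cmp_assoc HG); congruence.
  - intro f. destruct f as [[[o1 o2] a] [P1 [P2 P3]]]. simpl in P1, P2, P3.
    set (b := ginv HG a).
    assert (B : src b = hx o2 /\ tgt b = hx o1 /\ cmp (hphi o1) b = cmp (fa t b) (hphi o2)).
    { unfold b. rewrite (ginv_src HG), (ginv_tgt HG). split; auto. split; auto.
      destruct o1 as [[x1 f1] [S1 [S2 [S3 S4]]]]. destruct o2 as [[x2 f2] [T1 [T2 [T3 T4]]]].
      unfold hx, hphi in *. simpl in *.
      apply (cancel_l HG (g := fa t a)); [st|st|].
      rewrite (cmp_assoc HG), <- P3 by st.
      rewrite (cmp_assoc HG), <- (fun_cmp Ht), (ginv_r HG), (fun_id Ht) by st.
      rewrite <- (cmp_assoc HG), (ginv_r HG) by st.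
      rewrite (cmp_id_l' HG), (cmp_id_r' HG) by st. reflexivity. }
    exists (exist _ (o2, o1, b) B : harr t). simpl. split; auto. split; auto. split.
    + apply harr_eq. rewrite hcmp_eq by reflexivity. simpl. f_equal. unfold b.
      rewrite (ginv_l HG), P1. reflexivity.
    + apply harr_eq. rewrite hcmp_eq by reflexivity. simpl. f_equal. unfold b.
      rewrite (ginv_r HG), P2. reflexivity.
Qed.

End HfpGpd.

End M9.
Import M9.

Module M10.
Set Implicit Arguments.
Unset Strict Implicit.

Section HfpMap.
Variables (G H : PreGpd) (tG : PreFun G G) (tH : PreFun H H)
    (HG : is_gpd G) (HtG : is_fun tG) (HH : is_gpd H) (HtH : is_fun tH)
    (F : PreFun G H) (HF : is_fun F) (invG : forall x, fo tG (fo tG x) = x)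
    (co : forall x, fo F (fo tG x) = fo tH (fo F x))
    (ca : forall a, fa F (fa tG a) = fa tH (fa F a)).

Lemma hfp_map_fun : is_fun (hfp_map HG HtG HH HtH HF invG co ca).
Proof.
  constructor; simpl.
  - reflexivity.
  - reflexivity.
  - intro o. apply harr_eq. simpl. rewrite (fun_id HF). reflexivity.
  - intros g f Hc. simpl. unfold hcmp.
    repeat (destruct (excluded_middle_informative _) as [?|n]; [|exfalso; apply n; simpl; congruence]).
    apply harr_eq.
    simpl. f_equal. apply (fun_cmp HF).
    destruct g as [[[o3 o4] b] [Q1 [Q2 Q3]]].
    destruct f as [[[o1 o2] a] [P1 [P2 P3]]]. simpl in *. congruence.
Qed.
End HfpMap.

Lemma hfp_pgpd (C : Cat) (X : PGpd C) (aX : GammaAction X) : is_pgpd (hfp aX).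
Proof.
  constructor; simpl.
  - intro U. apply hfp_is_gpd.
  - intros. apply hfp_map_fun.
  - intros U o. apply hob_eq. simpl.
    rewrite (res_id_o (pg_ax X)), (res_id_a (pg_ax X)). unfold hx, hphi. destruct o as [[? ?] ?]. reflexivity.
  - intros U a. apply harr_eq. simpl.
    destruct a as [[[o1 o2] al] P]. simpl. f_equal; [f_equal|].
    + apply hob_eq. simpl. rewrite (res_id_o (pg_ax X)), (res_id_a (pg_ax X)). unfold hx, hphi. destruct o1 as [[? ?] ?]. reflexivity.
    + apply hob_eq. simpl. rewrite (res_id_o (pg_ax X)), (res_id_a (pg_ax X)). unfold hx, hphi. destruct o2 as [[? ?] ?]. reflexivity.
    + apply (res_id_a (pg_ax X)).
  - intros U V W f g o. apply hob_eq. simpl.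
    rewrite (res_comp_o (pg_ax X)), (res_comp_a (pg_ax X)). reflexivity.
  - intros U V W f g a. apply harr_eq. simpl.
    destruct a as [[[o1 o2] al] P]. simpl. f_equal; [f_equal|].
    + apply hob_eq. simpl. rewrite (res_comp_o (pg_ax X)), (res_comp_a (pg_ax X)). reflexivity.
    + apply hob_eq. simpl. rewrite (res_comp_o (pg_ax X)), (res_comp_a (pg_ax X)). reflexivity.
    + apply (res_comp_a (pg_ax X)).
Qed.

Lemma hfp_mor_is (C : Cat) (X Y : PGpd C) (aX : GammaAction X) (aY : GammaAction Y)
    (f : PMor X Y) (Hf : equivariant aX aY f) : is_mor (hfp_mor Hf).
Proof.
  constructor; simpl.
  - intro U. apply hfp_map_fun.
  - intros U V h o. apply hob_eq. simpl.
    unfold hx, hphi, hmap_ob; simpl. rewrite (mor_nat_o (pm_ax f)), (mor_nat_a (pm_ax f)). reflexivity.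
  - intros U V h a. apply harr_eq. simpl.
    destruct a as [[[o1 o2] al] P]. simpl. f_equal; [f_equal|].
    + apply hob_eq. unfold hx, hphi, hmap_ob; simpl. unfold hx, hphi; simpl. rewrite (mor_nat_o (pm_ax f)), (mor_nat_a (pm_ax f)). reflexivity.
    + apply hob_eq. unfold hx, hphi, hmap_ob; simpl. unfold hx, hphi; simpl. rewrite (mor_nat_o (pm_ax f)), (mor_nat_a (pm_ax f)). reflexivity.
    + apply (mor_nat_a (pm_ax f)).
Qed.

End M10.
Import M10.

Module M11.
Set Implicit Arguments.
Unset Strict Implicit.

Section Invol.
Variables (G : PreGpd) (HG : is_gpd G) (t : PreFun G G) (Ht : is_fun t)
  (tinv_o : forall x, fo t (fo t x) = x) (tinv_a : forall a, fa t (fa t a) = a).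

Ltac st := repeat progress (rewrite ?(fun_src Ht), ?(fun_tgt Ht), ?tinv_o,
   ?(ginv_src HG), ?(ginv_tgt HG), ?(src_id HG), ?(tgt_id HG);
   try (rewrite (src_cmp HG) by st); try (rewrite (tgt_cmp HG) by st)); congruence.

Lemma hob_second (x : Ob G) (ph : Arr G) : src ph = x -> tgt ph = fo t x ->
  cmp (fa t ph) ph = idg x -> cmp ph (fa t ph) = idg (fo t x).
Proof.
  intros H1 H2 H3. apply (f_equal (fa t)) in H3.
  rewrite (fun_cmp Ht), tinv_a, (fun_id Ht) in H3 by st. exact H3.
Qed.

Lemma conj_hob (e ps : Arr G) : src ps = tgt e -> tgt ps = fo t (tgt e) ->
  cmp (fa t ps) ps = idg (tgt e) ->
  cmp (fa t (cmp (fa t (ginv HG e)) (cmp ps e))) (cmp (fa t (ginv HG e)) (cmp ps e)) = idg (src e).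
Proof.
  intros H1 H2 H3.
  rewrite (fun_cmp Ht), (fun_cmp Ht), tinv_a by st.
  rewrite <- !(cmp_assoc HG) by st.
  rewrite (cmp_assoc HG (h := fa t e)) by st.
  rewrite <- (fun_cmp Ht), (ginv_r HG), (fun_id Ht) by st.
  rewrite (cmp_id_l' HG) by st.
  rewrite (cmp_assoc HG (h := fa t ps)), H3 by st.
  rewrite (cmp_id_l' HG) by st. apply (ginv_l HG).
Qed.

Lemma conj_hob2 (e ps : Arr G) : src ps = tgt e -> tgt ps = fo t (tgt e) ->
  cmp (fa t e) (cmp (fa t (ginv HG e)) (cmp ps e)) = cmp ps e.
Proof.
  intros H1 H2.
  rewrite (cmp_assoc HG) by st.
  rewrite <- (fun_cmp Ht), (ginv_r HG), (fun_id Ht) by st.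
  apply (cmp_id_l' HG). st.
Qed.

End Invol.

End M11.
Import M11.

Module M12.
Set Implicit Arguments.
Unset Strict Implicit.

Section HfpLocal.
Variables (S : Site) (p : Point S) (X Y : PGpd S) (aX : GammaAction X) (aY : GammaAction Y)
  (f : PMor X Y) (Hf : equivariant aX aY f).

Lemma rsrc (Z : PGpd S) U V (g : chom V U) a : src (fa (pres Z g) a) = fo (pres Z g) (src a).
Proof. apply (fun_src (res_fun (pg_ax Z) g)). Qed.
Lemma rtgt (Z : PGpd S) U V (g : chom V U) a : tgt (fa (pres Z g) a) = fo (pres Z g) (tgt a).
Proof. apply (fun_tgt (res_fun (pg_ax Z) g)). Qed.
Lemma rid (Z : PGpd S) U V (g : chom V U) x : fa (pres Z g) (idg x) = idg (fo (pres Z g) x).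
Proof. apply (fun_id (res_fun (pg_ax Z) g)). Qed.
Lemma rcmp (Z : PGpd S) U V (g : chom V U) b a : src b = tgt a ->
  fa (pres Z g) (cmp b a) = cmp (fa (pres Z g) b) (fa (pres Z g) a).
Proof. apply (fun_cmp (res_fun (pg_ax Z) g)). Qed.
Lemma rco (Z : PGpd S) U V W (f1 : chom V U) (g : chom W V) x :
  fo (pres Z (ccomp f1 g)) x = fo (pres Z g) (fo (pres Z f1) x).
Proof. apply (res_comp_o (pg_ax Z)). Qed.
Lemma rca (Z : PGpd S) U V W (f1 : chom V U) (g : chom W V) x :
  fa (pres Z (ccomp f1 g)) x = fa (pres Z g) (fa (pres Z f1) x).
Proof. apply (res_comp_a (pg_ax Z)). Qed.

Lemma fsrc U a : src (fa (mc f U) a) = fo (mc f U) (src a). Proof. apply (fun_src (mor_fun (pm_ax f) U)). Qed.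
Lemma ftgt U a : tgt (fa (mc f U) a) = fo (mc f U) (tgt a). Proof. apply (fun_tgt (mor_fun (pm_ax f) U)). Qed.
Lemma fid U x : fa (mc f U) (idg x) = idg (fo (mc f U) x). Proof. apply (fun_id (mor_fun (pm_ax f) U)). Qed.
Lemma fcmp U b a : src b = tgt a -> fa (mc f U) (cmp b a) = cmp (fa (mc f U) b) (fa (mc f U) a).
Proof. apply (fun_cmp (mor_fun (pm_ax f) U)). Qed.
Lemma fno U V (h : chom V U) x : fo (pres Y h) (fo (mc f U) x) = fo (mc f V) (fo (pres X h) x).
Proof. apply (mor_nat_o (pm_ax f)). Qed.
Lemma fna U V (h : chom V U) x : fa (pres Y h) (fa (mc f U) x) = fa (mc f V) (fa (pres X h) x).
Proof. apply (mor_nat_a (pm_ax f)). Qed.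
Lemma feo U x : fo (mc f U) (fo (tau aX U) x) = fo (tau aY U) (fo (mc f U) x). Proof. apply (proj1 Hf). Qed.
Lemma fea U x : fa (mc f U) (fa (tau aX U) x) = fa (tau aY U) (fa (mc f U) x). Proof. apply (proj2 Hf). Qed.

Lemma tsrc (Z : PGpd S) (aZ : GammaAction Z) U a : src (fa (tau aZ U) a) = fo (tau aZ U) (src a).
Proof. apply (fun_src (tau_fun aZ U)). Qed.
Lemma ttgt (Z : PGpd S) (aZ : GammaAction Z) U a : tgt (fa (tau aZ U) a) = fo (tau aZ U) (tgt a).
Proof. apply (fun_tgt (tau_fun aZ U)). Qed.
Lemma tro (Z : PGpd S) (aZ : GammaAction Z) U V (h : chom V U) x :
  fo (pres Z h) (fo (tau aZ U) x) = fo (tau aZ V) (fo (pres Z h) x).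
Proof. apply (tau_res_o aZ). Qed.
Lemma tra (Z : PGpd S) (aZ : GammaAction Z) U V (h : chom V U) x :
  fa (pres Z h) (fa (tau aZ U) x) = fa (tau aZ V) (fa (pres Z h) x).
Proof. apply (tau_res_a aZ). Qed.
Lemma tio (Z : PGpd S) (aZ : GammaAction Z) U x : fo (tau aZ U) (fo (tau aZ U) x) = x.
Proof. apply (tau_invol_o aZ). Qed.

Lemma hob_src (Z : PGpd S) (aZ : GammaAction Z) U (o : hob (tau aZ U)) : src (hphi o) = hx o.
Proof. apply (proj2_sig o). Qed.
Lemma hob_tgt (Z : PGpd S) (aZ : GammaAction Z) U (o : hob (tau aZ U)) : tgt (hphi o) = fo (tau aZ U) (hx o).
Proof. apply (proj2_sig o). Qed.
Lemma hob_l (Z : PGpd S) (aZ : GammaAction Z) U (o : hob (tau aZ U)) : cmp (fa (tau aZ U) (hphi o)) (hphi o) = idg (hx o).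
Proof. apply (proj2_sig o). Qed.

Ltac norm := repeat progress (rewrite ?rco, ?fno, ?tro, ?feo, ?tio).

Ltac hyprw := repeat match goal with
  | H : src ?a = ?r |- context [src ?a] =>
      lazymatch r with context [src _] => fail | context [tgt _] => fail | _ => rewrite H end
  | H : tgt ?a = ?r |- context [tgt ?a] =>
      lazymatch r with context [src _] => fail | context [tgt _] => fail | _ => rewrite H end
  end.

Ltac st := norm; repeat progress (rewrite ?rsrc, ?rtgt, ?hob_src, ?hob_tgt, ?fsrc, ?ftgt, ?tsrc, ?ttgt,
   ?(ginv_src (sec_gpd (pg_ax X) _)), ?(ginv_tgt (sec_gpd (pg_ax X) _)),
   ?(ginv_src (sec_gpd (pg_ax Y) _)), ?(ginv_tgt (sec_gpd (pg_ax Y) _)),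
   ?(src_id (sec_gpd (pg_ax X) _)), ?(tgt_id (sec_gpd (pg_ax X) _)),
   ?(src_id (sec_gpd (pg_ax Y) _)), ?(tgt_id (sec_gpd (pg_ax Y) _));
   try (rewrite (src_cmp (sec_gpd (pg_ax X) _)) by st); try (rewrite (tgt_cmp (sec_gpd (pg_ax X) _)) by st);
   try (rewrite (src_cmp (sec_gpd (pg_ax Y) _)) by st); try (rewrite (tgt_cmp (sec_gpd (pg_ax Y) _)) by st);
   norm; hyprw; norm); congruence.
Ltac st0 := norm; repeat progress (rewrite ?rsrc, ?rtgt, ?hob_src, ?hob_tgt, ?fsrc, ?ftgt, ?tsrc, ?ttgt,
   ?(ginv_src (sec_gpd (pg_ax X) _)), ?(ginv_tgt (sec_gpd (pg_ax X) _)),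
   ?(ginv_src (sec_gpd (pg_ax Y) _)), ?(ginv_tgt (sec_gpd (pg_ax Y) _)),
   ?(src_id (sec_gpd (pg_ax X) _)), ?(tgt_id (sec_gpd (pg_ax X) _)),
   ?(src_id (sec_gpd (pg_ax Y) _)), ?(tgt_id (sec_gpd (pg_ax Y) _));
   try (rewrite (src_cmp (sec_gpd (pg_ax X) _)) by st); try (rewrite (tgt_cmp (sec_gpd (pg_ax X) _)) by st);
   try (rewrite (src_cmp (sec_gpd (pg_ax Y) _)) by st); try (rewrite (tgt_cmp (sec_gpd (pg_ax Y) _)) by st);
   norm); idtac.

Lemma hLF_ok : LF p f -> LF p (hfp_mor Hf).
Proof.
  intros H U u a b E1 E2 E3.
  destruct a as [[[o1 o2] al] [P1 [P2 P3]]], b as [[[o1' o2'] be] [Q1 [Q2 Q3]]].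
  simpl in *. subst o1' o2'.
  apply (f_equal (fun z : harr (tau aY U) => snd (proj1_sig z))) in E3. simpl in E3.
  destruct (H U u al be) as [W [w [g [G1 G2]]]]; [congruence|congruence|exact E3|].
  exists W, w, g. split; auto. apply harr_eq. simpl. rewrite G2. reflexivity.
Qed.


Lemma hLFull_ok : LF p f -> LFull p f -> LFull p (hfp_mor Hf).
Proof.
  intros HF HL U u o o1 b E1 E2.
  destruct b as [[[q1 q2] be] [Q1 [Q2 Q3]]]. simpl in E1, E2. subst q1 q2.
  change (src be = fo (mc f U) (hx o)) in Q1. change (tgt be = fo (mc f U) (hx o1)) in Q2.
  change (cmp (fa (mc f U) (hphi o1)) be = cmp (fa (tau aY U) be) (fa (mc f U) (hphi o))) in Q3.
  destruct (HL U u (hx o) (hx o1) be) as [W [w [g [al [G1 [A1 [A2 A3]]]]]]]; [exact Q1|exact Q2|].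
  pose proof (hob_src o) as O1. pose proof (hob_tgt o) as O2.
  pose proof (hob_src o1) as O1'. pose proof (hob_tgt o1) as O2'.
  destruct (HF W w (cmp (fa (pres X g) (hphi o1)) al) (cmp (fa (tau aX W) al) (fa (pres X g) (hphi o))))
    as [W2 [w2 [g2 [G2 E]]]].
  - st.
  - st.
  - rewrite !fcmp by st. rewrite A3, <- fna, <- rcmp by st. rewrite Q3.
    rewrite rcmp by st. rewrite tra, <- A3, <- fea, fna. reflexivity.
  - assert (Hh : src (fa (pres X g2) al) = fo (pres X (ccomp g g2)) (hx o) /\
                 tgt (fa (pres X g2) al) = fo (pres X (ccomp g g2)) (hx o1) /\
                 cmp (fa (pres X (ccomp g g2)) (hphi o1)) (fa (pres X g2) al) =
                 cmp (fa (tau aX W2) (fa (pres X g2) al)) (fa (pres X (ccomp g g2)) (hphi o))).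
    { split; [st|]. split; [st|].
      rewrite !rca, <- rcmp by st. rewrite E. rewrite rcmp by st.
      rewrite tra. reflexivity. }
    exists W2, w2, (ccomp g g2).
    exists (exist _ (fo (pres (hfp aX) (ccomp g g2)) o, fo (pres (hfp aX) (ccomp g g2)) o1,
                     fa (pres X g2) al) Hh : harr (tau aX W2)).
    split; [eapply ptc; eauto|]. split; [reflexivity|]. split; [reflexivity|].
    apply harr_eq. simpl. f_equal; [f_equal|].
    + apply hob_eq. unfold hx, hphi, hmap_ob; simpl. unfold hx, hphi; simpl. rewrite fno, fna. reflexivity.
    + apply hob_eq. unfold hx, hphi, hmap_ob; simpl. unfold hx, hphi; simpl. rewrite fno, fna. reflexivity.
    + rewrite <- fna, A3, <- rca. reflexivity.
Qed.

Ltac normh H := repeat progress (rewrite ?rco, ?fno, ?tro, ?feo, ?tio in H).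

Lemma hLES_ok : LF p f -> LFull p f -> LES p f -> LES p (hfp_mor Hf).
Proof.
  intros HF HL HE U u o.
  destruct (HE U u (hx o)) as [W [w [g [x [e [G1 [E1 E2]]]]]]].
  pose proof (hob_l o) as OL.
  assert (PS1 : src (fa (pres Y g) (hphi o)) = tgt e) by st.
  assert (PS2 : tgt (fa (pres Y g) (hphi o)) = fo (tau aY W) (tgt e)) by st.
  assert (PS3 : cmp (fa (tau aY W) (fa (pres Y g) (hphi o))) (fa (pres Y g) (hphi o)) = idg (tgt e)).
  { rewrite <- tra, <- rcmp by st. rewrite OL, rid, E2. reflexivity. }
  destruct (HL W w x (fo (tau aX W) x)
     (cmp (fa (tau aY W) (ginv (sec_gpd (pg_ax Y) W) e)) (cmp (fa (pres Y g) (hphi o)) e)))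
    as [W2 [w2 [g2 [ph [G2 [P1 [P2 P3]]]]]]]; [st|st|].
  normh P2.
  destruct (HF W2 w2 (cmp (fa (tau aX W2) ph) ph) (idg (fo (pres X g2) x))) as [W3 [w3 [g3 [G3 E3]]]];
    [st|st| |].
  { rewrite fcmp by st. rewrite fea, P3, <- tra, <- rcmp by st.
    rewrite (conj_hob (sec_gpd (pg_ax Y) W) (tau_fun aY W) (tau_invol_o aY (U:=W)) (tau_invol_a aY (U:=W)) PS1 PS2 PS3).
    rewrite rid, fid, E1, fno. reflexivity. }
  assert (H1 : src (fa (pres X g3) ph) = fo (pres X g3) (fo (pres X g2) x)) by st.
  assert (H2 : tgt (fa (pres X g3) ph) = fo (tau aX W3) (fo (pres X g3) (fo (pres X g2) x))) by st.
  assert (H3 : cmp (fa (tau aX W3) (fa (pres X g3) ph)) (fa (pres X g3) ph) = idg (fo (pres X g3) (fo (pres X g2) x))).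
  { rewrite <- tra, <- rcmp by st. rewrite E3, rid. reflexivity. }
  pose proof (hob_second (tau_fun aX W3) (tau_invol_a aX (U:=W3)) H1 H2 H3) as H4.
  set (ox := exist _ (fo (pres X g3) (fo (pres X g2) x), fa (pres X g3) ph) (conj H1 (conj H2 (conj H3 H4))) : hob (tau aX W3)).
  assert (K1 : src (fa (pres Y (ccomp g2 g3)) e) = hx (fo (mc (hfp_mor Hf) W3) ox)).
  { change (src (fa (pres Y (ccomp g2 g3)) e) = fo (mc f W3) (fo (pres X g3) (fo (pres X g2) x))). st. }
  assert (K2 : tgt (fa (pres Y (ccomp g2 g3)) e) = hx (fo (pres (hfp aY) (ccomp g (ccomp g2 g3))) o)).
  { change (tgt (fa (pres Y (ccomp g2 g3)) e) = fo (pres Y (ccomp g (ccomp g2 g3))) (hx o)). st. }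
  assert (K3 : cmp (hphi (fo (pres (hfp aY) (ccomp g (ccomp g2 g3))) o)) (fa (pres Y (ccomp g2 g3)) e) =
               cmp (fa (tau aY W3) (fa (pres Y (ccomp g2 g3)) e)) (hphi (fo (mc (hfp_mor Hf) W3) ox))).
  { change (cmp (fa (pres Y (ccomp g (ccomp g2 g3))) (hphi o)) (fa (pres Y (ccomp g2 g3)) e) =
            cmp (fa (tau aY W3) (fa (pres Y (ccomp g2 g3)) e)) (fa (mc f W3) (fa (pres X g3) ph))).
    transitivity (fa (pres Y (ccomp g2 g3)) (cmp (fa (pres Y g) (hphi o)) e)).
    { rewrite (rcmp (ccomp g2 g3)) by exact PS1. rewrite (rca g (ccomp g2 g3)). reflexivity. }
    rewrite <- (conj_hob2 (sec_gpd (pg_ax Y) W) (tau_fun aY W) PS1 PS2).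
    rewrite (rcmp (ccomp g2 g3)) by st. f_equal.
    - apply tra.
    - rewrite <- fna, P3, <- rca. reflexivity. }
  exists W3, w3, (ccomp g (ccomp g2 g3)), ox.
  exists (exist _ (fo (mc (hfp_mor Hf) W3) ox, fo (pres (hfp aY) (ccomp g (ccomp g2 g3))) o,
                   fa (pres Y (ccomp g2 g3)) e) (conj K1 (conj K2 K3)) : harr (tau aY W3)).
  split; [eapply ptc; [eapply ptc; eauto | eauto]|]. split; reflexivity.
Qed.

End HfpLocal.

End M12.
Import M12.

Theorem mainTheorem8 (S : Site) (HS : enough_points S) (X Y : PGpd S)
    (aX : GammaAction X) (aY : GammaAction Y) (f : PMor X Y)
    (Hf : equivariant aX aY f) :
  local_we f -> local_we (hfp_mor Hf).
Proof.
  intros H p.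
  destruct (H p) as [K [eta [eps [HK [Heta Heps]]]]].
  pose proof (stalk_is_gpd p (pg_ax X)) as GX.
  pose proof (stalk_is_gpd p (pg_ax Y)) as GY.
  pose proof (stalk_fun_is_fun p (pg_ax X) (pg_ax Y) (pm_ax f)) as FF.
  assert (sf : SF (stalk_fun p f)) by exact (eq_SF GX Heta).
  assert (sfull : SFull (stalk_fun p f)) by exact (eq_SFull GX GY FF HK Heta Heps).
  assert (ses : SES (stalk_fun p f)) by exact (eq_SES Heps).
  assert (lf : LF p f) by exact (SF_LF (pg_ax X) (pg_ax Y) (pm_ax f) sf).
  assert (lfull : LFull p f) by exact (SFull_LFull (pg_ax X) (pg_ax Y) (pm_ax f) sf sfull).
  assert (les : LES p f) by exact (SES_LES (pg_ax X) (pg_ax Y) (pm_ax f) ses).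
  pose proof (hfp_pgpd aX) as HX'. pose proof (hfp_pgpd aY) as HY'.
  pose proof (hfp_mor_is Hf) as Hm.
  apply (ff_equiv (stalk_is_gpd p HX') (stalk_is_gpd p HY') (stalk_fun_is_fun p HX' HY' Hm)).
  - exact (LF_SF HX' HY' Hm (hLF_ok lf)).
  - exact (LFull_SFull HX' HY' Hm (hLFull_ok lf lfull)).
  - exact (LES_SES HX' HY' Hm (hLES_ok Hf lf lfull les)).
Qed.
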